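(* Let $\Omega\subset\mathbb{C}$ be a simply connected domain and let $(g,\mathcal{P},\mathcal{Q})$ be a Weierstrass data of the first kind on $\Omega$. Then there exists a map $\mathbf{X}=(\mathbf{x}_1,\mathbf{x}_2,\mathbf{x}_3,\mathbf{x}_4):\Omega\to\mathbb{L}^4$ (unique up to an additive constant vector) with $$\mathbf{X}_z=\mathcal{P}_z\begin{bmatrix}1/g\\ i/g\\ 1\\ 1\end{bmatrix}+\mathcal{Q}_z\begin{bmatrix}g\\ -ig\\ -1\\ 1\end{bmatrix},$$ and it satisfies: (i) $\mathbf{X}_{z\overline z}=\mathcal{Q}_{z\overline z}\,\mathcal{G}$, where $\mathcal{G}:=\big(2\,\mathrm{Re}\,g,\;2\,\mathrm{Im}\,g,\;-1+|g|^2,\;1+|g|^2\big)^T$; (ii) up to additive constants, $\mathbf{x}_3=\mathcal{P}-\mathcal{Q}$ and $\mathbf{x}_4=\mathcal{P}+\mathcal{Q}$; (iii) $\langle\mathcal{G},\mathcal{G}\rangle=0$ and $\langle\mathbf{X}_z,\mathcal{G}\rangle=0$; (iv) $\mathbf{X}$ is a conformal spacelike immersion whose induced metric is $$ds^2=\frac{4}{|g|^2}\left|\mathcal{P}_z-|g|^2\mathcal{Q}_z\right|^2|dz|^2;$$ (v) the surface $\mathbf{X}(\Omega)$ is marginally trapped, i.e. its mean curvature vector $\mathbf{H}$ satisfies $\langle\mathbf{H},\mathbf{H}\rangle=0$.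
   Context: $\Omega\subset\mathbb{R}^2\equiv\mathbb{C}$ has complex coordinate $z=u+iv$, and $\partial_z=\frac12(\partial_u-i\partial_v)$, $\partial_{\overline z}=\frac12(\partial_u+i\partial_v)$; subscripts denote partial derivatives. $\mathbb{L}^4$ is $\mathbb{R}^4$ with the Lorentzian metric $\langle x,y\rangle=x_1y_1+x_2y_2+x_3y_3-x_4y_4$; this form is extended complex-bilinearly to $\mathbb{C}^4$. A map $\mathbf{X}:\Omega\to\mathbb{L}^4$ is a conformal spacelike immersion with metric $\Lambda|dz|^2=\Lambda(du^2+dv^2)$, $\Lambda>0$, iff $\langle\mathbf{X}_z,\mathbf{X}_z\rangle=0$ and $\Lambda=2\langle\mathbf{X}_z,\overline{\mathbf{X}_z}\rangle>0$. Its mean curvature vector is $\mathbf{H}=\Delta_{ds^2}\mathbf{X}=\frac{4}{\Lambda}\mathbf{X}_{z\overline z}$. A spacelike surface is marginally trapped if $\langle\mathbf{H},\mathbf{H}\rangle=0$. A Weierstrass data of the first kind on $\Omega$ is a triple $(g,\mathcal{P},\mathcal{Q})$ where $g:\Omega\to\mathbb{C}\setminus\{0\}$ and $\mathcal{P},\mathcal{Q}:\Omega\to\mathbb{R}$ are $\mathcal{C}^2$, satisfying $g_{\overline z}=0$, $\mathcal{P}_{z\overline z}=|g|^2\mathcal{Q}_{z\overline z}$, and $\mathcal{P}_z-|g|^2\mathcal{Q}_z\neq0$ at every point of $\Omega$. *)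

(* Defs.v *)
From Stdlib Require Import Reals.
From Coquelicot Require Import Coquelicot.
Open Scope R_scope.

(* A continuous map on [0,1] (resp. [0,1]^2) extends
   continuously to R (resp. R^2) by clamping, so requiring global continuity
   is no restriction. *)
Definition path_connected (U : C -> Prop) : Prop :=
  forall a b : C, U a -> U b ->
    exists gamma : R -> C,
      (forall t : R, continuous gamma t) /\
      gamma 0 = a /\ gamma 1 = b /\
      (forall t : R, 0 <= t <= 1 -> U (gamma t)).

Definition loops_contractible (U : C -> Prop) : Prop :=
  forall gamma : R -> C,
    (forall t : R, continuous gamma t) ->
    (forall t : R, 0 <= t <= 1 -> U (gamma t)) ->
    gamma 0 = gamma 1 ->
    exists Hm : R * R -> C,
      (forall p : R * R, continuous Hm p) /\
      (forall s t : R, 0 <= s <= 1 -> 0 <= t <= 1 -> U (Hm (s, t))) /\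
      (forall t : R, 0 <= t <= 1 -> Hm (0, t) = gamma t) /\
      (forall t : R, 0 <= t <= 1 -> Hm (1, t) = Hm (1, 0)) /\
      (forall s : R, 0 <= s <= 1 -> Hm (s, 0) = Hm (s, 1)).

Definition simply_connected_domain (U : C -> Prop) : Prop :=
  (exists z, U z) /\ open U /\ path_connected U /\ loops_contractible U.

Definition du (f : C -> R) (z : C) : R := Derive (fun t => f (t, snd z)) (fst z).
Definition dv (f : C -> R) (z : C) : R := Derive (fun t => f (fst z, t)) (snd z).

Definition duC (F : C -> C) (z : C) : C :=
  (du (fun w => Re (F w)) z, du (fun w => Im (F w)) z).
Definition dvC (F : C -> C) (z : C) : C :=
  (dv (fun w => Re (F w)) z, dv (fun w => Im (F w)) z).

Definition dzC (F : C -> C) (z : C) : C :=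
  Cmult (RtoC (/2)) (Cminus (duC F z) (Cmult Ci (dvC F z))).
Definition dzbC (F : C -> C) (z : C) : C :=
  Cmult (RtoC (/2)) (Cplus (duC F z) (Cmult Ci (dvC F z))).

Definition dz (f : C -> R) : C -> C := dzC (fun w => RtoC (f w)).
Definition dzb (f : C -> R) : C -> C := dzbC (fun w => RtoC (f w)).

Definition dzdzb (f : C -> R) : C -> C := dzbC (dz f).

Definition C1_on (U : C -> Prop) (f : C -> R) : Prop :=
  forall z : C, U z ->
    ex_derive (fun t => f (t, snd z)) (fst z) /\
    ex_derive (fun t => f (fst z, t)) (snd z) /\
    continuous f z /\ continuous (du f) z /\ continuous (dv f) z.

Definition C2_on (U : C -> Prop) (f : C -> R) : Prop :=
  C1_on U f /\ C1_on U (du f) /\ C1_on U (dv f).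

Definition C2C_on (U : C -> Prop) (F : C -> C) : Prop :=
  C2_on U (fun w => Re (F w)) /\ C2_on U (fun w => Im (F w)).

Definition partials_exist_on (U : C -> Prop) (f : C -> R) : Prop :=
  forall z : C, U z ->
    ex_derive (fun t => f (t, snd z)) (fst z) /\
    ex_derive (fun t => f (fst z, t)) (snd z).

Definition Cabs2 (w : C) : C := RtoC (Cmod w ^ 2).

Definition weierstrass_first_kind (U : C -> Prop) (g : C -> C) (P Q : C -> R) : Prop :=
  C2C_on U g /\ C2_on U P /\ C2_on U Q /\
  (forall z, U z -> g z <> RtoC 0) /\
  (forall z, U z -> dzbC g z = RtoC 0) /\
  (forall z, U z -> dzdzb P z = Cmult (Cabs2 (g z)) (dzdzb Q z)) /\
  (forall z, U z -> Cminus (dz P z) (Cmult (Cabs2 (g z)) (dz Q z)) <> RtoC 0).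

Definition C4 : Type := (C * C * C * C)%type.

(* complex-bilinear extension of <x,y> = x1y1 + x2y2 + x3y3 - x4y4 *)
Definition lor (a b : C4) : C :=
  match a, b with
  | (a1, a2, a3, a4), (b1, b2, b3, b4) =>
      Cminus (Cplus (Cplus (Cmult a1 b1) (Cmult a2 b2)) (Cmult a3 b3)) (Cmult a4 b4)
  end.

Definition conj4 (a : C4) : C4 :=
  match a with (a1, a2, a3, a4) => (Cconj a1, Cconj a2, Cconj a3, Cconj a4) end.

Definition scal4 (c : C) (a : C4) : C4 :=
  match a with (a1, a2, a3, a4) => (Cmult c a1, Cmult c a2, Cmult c a3, Cmult c a4) end.

Definition add4 (a b : C4) : C4 :=
  match a, b with
  | (a1, a2, a3, a4), (b1, b2, b3, b4) => (Cplus a1 b1, Cplus a2 b2, Cplus a3 b3, Cplus a4 b4)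
  end.

Definition Xz (x1 x2 x3 x4 : C -> R) (z : C) : C4 :=
  (dz x1 z, dz x2 z, dz x3 z, dz x4 z).
Definition Xzzb (x1 x2 x3 x4 : C -> R) (z : C) : C4 :=
  (dzdzb x1 z, dzdzb x2 z, dzdzb x3 z, dzdzb x4 z).

Definition Lambda (x1 x2 x3 x4 : C -> R) (z : C) : C :=
  Cmult (RtoC 2) (lor (Xz x1 x2 x3 x4 z) (conj4 (Xz x1 x2 x3 x4 z))).

Definition conformal_spacelike_at (x1 x2 x3 x4 : C -> R) (z : C) : Prop :=
  lor (Xz x1 x2 x3 x4 z) (Xz x1 x2 x3 x4 z) = RtoC 0 /\
  Im (Lambda x1 x2 x3 x4 z) = 0 /\ 0 < Re (Lambda x1 x2 x3 x4 z).

Definition meanH (x1 x2 x3 x4 : C -> R) (z : C) : C4 :=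
  scal4 (Cdiv (RtoC 4) (Lambda x1 x2 x3 x4 z)) (Xzzb x1 x2 x3 x4 z).

Definition WformulaXz (g : C -> C) (P Q : C -> R) (z : C) : C4 :=
  add4
    (scal4 (dz P z) (Cinv (g z), Cdiv Ci (g z), RtoC 1, RtoC 1))
    (scal4 (dz Q z) (g z, Cmult (Copp Ci) (g z), RtoC (-1), RtoC 1)).

Definition Gvec (g : C -> C) (z : C) : C4 :=
  (RtoC (2 * Re (g z)), RtoC (2 * Im (g z)),
   RtoC (-1 + Cmod (g z) ^ 2), RtoC (1 + Cmod (g z) ^ 2)).

(* Main.v *)
Require Import Defs.
From Stdlib Require Import Reals Lra Lia Classical ClassicalEpsilon.
From Coquelicot Require Import Coquelicot.
Open Scope R_scope.


Lemma ballC_iff (z w : C) (e : R) :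
  ball z e w <-> Rabs (fst w - fst z) < e /\ Rabs (snd w - snd z) < e.
Proof. unfold ball; simpl. unfold prod_ball, ball; simpl. unfold AbsRing_ball, abs, minus, plus, opp; simpl. tauto. Qed.

Lemma ballR_iff (x y e : R) : ball x e y <-> Rabs (y - x) < e.
Proof. unfold ball; simpl. unfold AbsRing_ball, abs, minus, plus, opp; simpl. tauto. Qed.

Lemma cont_ed {U V : UniformSpace} (f : U -> V) (x : U) :
  continuous f x <-> (forall eps : posreal, exists d : posreal, forall y, ball x d y -> ball (f x) eps (f y)).
Proof.
  unfold continuous. rewrite filterlim_locally. split.
  - intros H eps. destruct (H eps) as [d Hd]. exists d. exact Hd.
  - intros H eps. destruct (H eps) as [d Hd]. exists d. exact Hd.
Qed.

Lemma contC (f : C -> R) z : continuous f z <->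
  (forall eps, 0 < eps -> exists d, 0 < d /\ forall w, Rabs (fst w - fst z) < d -> Rabs (snd w - snd z) < d -> Rabs (f w - f z) < eps).
Proof.
  rewrite cont_ed. split.
  - intros H eps Heps. destruct (H (mkposreal eps Heps)) as [d Hd]. exists d. split. apply cond_pos.
    intros w H1 H2. apply ballR_iff. apply Hd. apply ballC_iff. auto.
  - intros H eps. destruct (H eps (cond_pos eps)) as [d [Hd0 Hd]]. exists (mkposreal d Hd0).
    intros y Hy. apply ballC_iff in Hy. destruct Hy. apply ballR_iff. apply Hd; assumption.
Qed.

Lemma contRC (f : R -> C) t : continuous f t <->
  (forall eps, 0 < eps -> exists d, 0 < d /\ forall s, Rabs (s - t) < d -> Rabs (fst (f s) - fst (f t)) < eps /\ Rabs (snd (f s) - snd (f t)) < eps).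
Proof.
  rewrite cont_ed. split.
  - intros H eps Heps. destruct (H (mkposreal eps Heps)) as [d Hd]. exists d. split. apply cond_pos.
    intros s H1. apply ballC_iff. apply Hd. apply ballR_iff. auto.
  - intros H eps. destruct (H eps (cond_pos eps)) as [d [Hd0 Hd]]. exists (mkposreal d Hd0).
    intros y Hy. apply ballR_iff in Hy. apply ballC_iff. apply Hd; assumption.
Qed.

Lemma contRRC (f : R * R -> C) p : continuous f p <->
  (forall eps, 0 < eps -> exists d, 0 < d /\ forall q, Rabs (fst q - fst p) < d -> Rabs (snd q - snd p) < d -> Rabs (fst (f q) - fst (f p)) < eps /\ Rabs (snd (f q) - snd (f p)) < eps).
Proof.
  rewrite cont_ed. split.
  - intros H eps Heps. destruct (H (mkposreal eps Heps)) as [d Hd]. exists d. split. apply cond_pos.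
    intros q H1 H2. apply ballC_iff. apply Hd. apply ballC_iff. auto.
  - intros H eps. destruct (H eps (cond_pos eps)) as [d [Hd0 Hd]]. exists (mkposreal d Hd0).
    intros y Hy. apply ballC_iff in Hy. destruct Hy. apply ballC_iff. apply Hd; assumption.
Qed.

Lemma contRR (f : R -> R) t : continuous f t <->
  (forall eps, 0 < eps -> exists d, 0 < d /\ forall s, Rabs (s - t) < d -> Rabs (f s - f t) < eps).
Proof.
  rewrite cont_ed. split.
  - intros H eps Heps. destruct (H (mkposreal eps Heps)) as [d Hd]. exists d. split. apply cond_pos.
    intros s H1. apply ballR_iff. apply Hd. apply ballR_iff. auto.
  - intros H eps. destruct (H eps (cond_pos eps)) as [d [Hd0 Hd]]. exists (mkposreal d Hd0).
    intros y Hy. apply ballR_iff in Hy. apply ballR_iff. apply Hd; assumption.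
Qed.

Lemma openC_iff (U : C -> Prop) : open U -> forall z, U z -> exists r, 0 < r /\
  forall w, Rabs (fst w - fst z) < r -> Rabs (snd w - snd z) < r -> U w.
Proof.
  intros HU z Hz. destruct (HU z Hz) as [r Hr]. exists r. split. apply cond_pos.
  intros w H1 H2. apply Hr. apply ballC_iff; auto.
Qed.

Lemma cont_sec1 (f : C -> R) u v : continuous f (u, v) -> continuous (fun t => f (t, v)) u.
Proof.
  rewrite contC, contRR. intros H eps Heps. destruct (H eps Heps) as [d [Hd H']].
  exists d. split; auto. intros s Hs. apply (H' (s, v)); simpl; auto.
  replace (v - v) with 0 by ring. rewrite Rabs_R0; auto.
Qed.
Lemma cont_sec2 (f : C -> R) u v : continuous f (u, v) -> continuous (fun t => f (u, t)) v.
Proof.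
  rewrite contC, contRR. intros H eps Heps. destruct (H eps Heps) as [d [Hd H']].
  exists d. split; auto. intros s Hs. apply (H' (u, s)); simpl; auto.
  replace (u - u) with 0 by ring. rewrite Rabs_R0; auto.
Qed.

Definition sq (c : C) (r : R) (p : C) : Prop :=
  Rabs (fst p - fst c) < r /\ Rabs (snd p - snd c) < r.

Lemma between_in (x y t c r : R) : Rabs (x - c) < r -> Rabs (y - c) < r ->
  Rmin x y <= t <= Rmax x y -> Rabs (t - c) < r.
Proof. unfold Rmin, Rmax. intros H1 H2 H3. destruct (Rle_dec x y); 
  apply Rabs_def1; apply Rabs_def2 in H1; apply Rabs_def2 in H2; lra. Qed.

Lemma sq_loc c r w : sq c r w -> exists e, 0 < e /\ forall p,
  Rabs (fst p - fst w) < e -> Rabs (snd p - snd w) < e -> sq c r p.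
Proof.
  intros [H1 H2]. exists (Rmin (r - Rabs (fst w - fst c)) (r - Rabs (snd w - snd c))).
  split. apply Rmin_pos; lra.
  intros p Hp1 Hp2. pose proof (Rmin_l (r - Rabs (fst w - fst c)) (r - Rabs (snd w - snd c))).
  pose proof (Rmin_r (r - Rabs (fst w - fst c)) (r - Rabs (snd w - snd c))).
  split.
  - replace (fst p - fst c) with ((fst p - fst w) + (fst w - fst c)) by ring.
    eapply Rle_lt_trans. apply Rabs_triang. lra.
  - replace (snd p - snd c) with ((snd p - snd w) + (snd w - snd c)) by ring.
    eapply Rle_lt_trans. apply Rabs_triang. lra.
Qed.

Lemma locally_R_of (x : R) (P : R -> Prop) e : 0 < e -> (forall y, Rabs (y - x) < e -> P y) -> locally x P.
Proof. intros He H. exists (mkposreal e He). intros y Hy. apply H. apply ballR_iff in Hy. exact Hy. Qed.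

Lemma is_derive_contpt f x l : is_derive f x l -> continuity_pt f x.
Proof. intros H. apply continuity_pt_filterlim. pose proof (ex_derive_continuous f x (ex_intro _ l H)) as HC. exact HC. Qed.

Lemma lip1d (f df : R -> R) (a b K : R) :
  (forall t, Rmin a b <= t <= Rmax a b -> is_derive f t (df t) /\ Rabs (df t) <= K) ->
  Rabs (f b - f a) <= K * Rabs (b - a).
Proof.
  intros H. destruct (MVT_gen f a b df) as [c [Hc Heq]].
  - intros x Hx. apply H. lra.
  - intros x Hx. apply is_derive_contpt with (df x). apply H. exact Hx.
  - rewrite Heq, Rabs_mult. apply Rmult_le_compat_r. apply Rabs_pos. apply H. exact Hc.
Qed.

Lemma const1d (f : R -> R) (a b : R) :
  (forall t, Rmin a b <= t <= Rmax a b -> is_derive f t 0) -> f a = f b.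
Proof.
  intros H. assert (Rabs (f b - f a) <= 0 * Rabs (b - a)).
  apply lip1d with (df := fun _ => 0). intros t Ht. split. apply H; auto. rewrite Rabs_R0; lra.
  rewrite Rmult_0_l in H0. pose proof (Rabs_pos (f b - f a)).
  assert (Rabs (f b - f a) = 0) by lra. apply Rabs_eq_0 in H2. lra.
Qed.

Lemma const_sq (h : C -> R) c r :
  (forall w, sq c r w -> is_derive (fun t => h (t, snd w)) (fst w) 0 /\ is_derive (fun t => h (fst w, t)) (snd w) 0) ->
  forall p q, sq c r p -> sq c r q -> h p = h q.
Proof.
  intros H p q [Hp1 Hp2] [Hq1 Hq2].
  transitivity (h (fst q, snd p)).
  - destruct p as [p1 p2]. simpl in *.
    apply (const1d (fun t => h (t, p2)) p1 (fst q)). intros t Ht.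
    apply (H (t, p2)). split; simpl; auto. apply (between_in p1 (fst q) t); auto.
  - destruct q as [q1 q2]. simpl in *.
    apply (const1d (fun t => h (q1, t)) (snd p) q2). intros t Ht.
    apply (H (q1, t)). split; simpl; auto. apply (between_in (snd p) q2 t); auto.
Qed.

Definition J (A B : C -> R) (p q : C) : R :=
  RInt (fun s => A (s, snd p)) (fst p) (fst q) + RInt (fun t => B (fst q, t)) (snd p) (snd q).

Definition closed_form (Om : C -> Prop) (A B D : C -> R) : Prop :=
  forall z, Om z -> continuous A z /\ continuous B z /\ continuous D z /\
    is_derive (fun t => A (fst z, t)) (snd z) (D z) /\ is_derive (fun t => B (t, snd z)) (fst z) (D z).

Definition sqsub (Om : C -> Prop) c r := forall p, sq c r p -> Om p.

Lemma exRInt_B (Om : C -> Prop) A B D c r x a b :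
  closed_form Om A B D -> sqsub Om c r -> Rabs (x - fst c) < r -> Rabs (a - snd c) < r -> Rabs (b - snd c) < r ->
  ex_RInt (fun t => B (x, t)) a b.
Proof.
  intros HF HS Hx Ha Hb. apply (@ex_RInt_continuous R_CompleteNormedModule). intros z Hz.
  apply cont_sec2. apply (HF (x, z)). apply HS. split; simpl; auto. apply (between_in a b z); auto.
Qed.

Lemma exRInt_A (Om : C -> Prop) A B D c r y a b :
  closed_form Om A B D -> sqsub Om c r -> Rabs (y - snd c) < r -> Rabs (a - fst c) < r -> Rabs (b - fst c) < r ->
  ex_RInt (fun s => A (s, y)) a b.
Proof.
  intros HF HS Hy Ha Hb. apply (@ex_RInt_continuous R_CompleteNormedModule). intros z Hz.
  apply cont_sec1. apply (HF (z, y)). apply HS. split; simpl; auto. apply (between_in a b z); auto.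
Qed.

Lemma is_derive_val {f : R -> R} {x l l'} : is_derive f x l -> l = l' -> is_derive f x l'.
Proof. intros H ->; exact H. Qed.

Lemma J_dv (Om : C -> Prop) A B D c r p w :
  closed_form Om A B D -> sqsub Om c r -> sq c r p -> sq c r w ->
  is_derive (fun t => J A B p (fst w, t)) (snd w) (B w).
Proof.
  intros HF HS [Hp1 Hp2] [Hw1 Hw2]. destruct w as [w1 w2]. simpl in *.
  unfold J; simpl.
  assert (He : exists e, 0 < e /\ forall y, Rabs (y - w2) < e -> Rabs (y - snd c) < r).
  { exists (r - Rabs (w2 - snd c)). split. lra. intros y Hy.
    replace (y - snd c) with ((y - w2) + (w2 - snd c)) by ring.
    eapply Rle_lt_trans. apply Rabs_triang. lra. }
  destruct He as [e [He0 He]].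
  eapply is_derive_val.
  apply (is_derive_plus (fun _ => RInt (fun s => A (s, snd p)) (fst p) w1) (fun t => RInt (fun t0 => B (w1, t0)) (snd p) t)).
  apply is_derive_const.
  apply (is_derive_RInt (fun t0 => B (w1, t0)) (fun t => RInt (fun t0 => B (w1, t0)) (snd p) t) (snd p) w2).
  apply locally_R_of with e; auto. intros y Hy. apply (@RInt_correct R_CompleteNormedModule).
  apply (exRInt_B Om A B D c r); auto.
  apply cont_sec2. apply (HF (w1, w2)). apply HS. split; simpl; auto.
  unfold plus, zero; simpl. ring.
Qed.

Lemma J_du (Om : C -> Prop) A B D c r p w :
  closed_form Om A B D -> sqsub Om c r -> sq c r p -> sq c r w ->
  is_derive (fun t => J A B p (t, snd w)) (fst w) (A w).
Proof.
  intros HF HS [Hp1 Hp2] [Hw1 Hw2]. destruct w as [w1 w2]. simpl in *.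
  unfold J; simpl.
  assert (He : exists e, 0 < e /\ forall y, Rabs (y - w1) < e -> Rabs (y - fst c) < r).
  { exists (r - Rabs (w1 - fst c)). split. lra. intros y Hy.
    replace (y - fst c) with ((y - w1) + (w1 - fst c)) by ring.
    eapply Rle_lt_trans. apply Rabs_triang. lra. }
  destruct He as [e [He0 He]].
  assert (HI : RInt (fun t => Derive (fun u => B (u, t)) w1) (snd p) w2 = A (w1, w2) - A (w1, snd p)).
  { rewrite (RInt_ext _ (fun t => D (w1, t))).
    - apply is_RInt_unique.
      apply (is_RInt_derive (fun t => A (w1, t)) (fun t => D (w1, t))).
      + intros x Hx. assert (Hin : Om (w1, x)). apply HS. split; simpl; auto. apply (between_in (snd p) w2 x); auto.
        apply (HF _ Hin).
      + intros x Hx. assert (Hin : Om (w1, x)). apply HS. split; simpl; auto. apply (between_in (snd p) w2 x); auto.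
        apply cont_sec2. apply (HF _ Hin).
    - intros x Hx. assert (Hin : Om (w1, x)). apply HS. split; simpl; auto. apply (between_in (snd p) w2 x); auto; lra.
      apply is_derive_unique. apply (HF _ Hin). }
  eapply is_derive_val.
  apply (is_derive_plus (fun t => RInt (fun s => A (s, snd p)) (fst p) t) (fun t => RInt (fun t0 => B (t, t0)) (snd p) w2)).
  apply (is_derive_RInt (fun s => A (s, snd p)) (fun t => RInt (fun s => A (s, snd p)) (fst p) t) (fst p) w1).
  apply locally_R_of with e; auto. intros y Hy. apply (@RInt_correct R_CompleteNormedModule).
  apply (exRInt_A Om A B D c r); auto.
  apply cont_sec1. apply (HF (w1, snd p)). apply HS. split; simpl; auto.
  apply (is_derive_RInt_param (fun u t => B (u, t)) (snd p) w2 w1).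
  - apply locally_R_of with e; auto. intros y Hy t Ht.
    assert (Hin : Om (y, t)). apply HS. split; simpl; auto. apply (between_in (snd p) w2 t); auto.
    exists (D (y, t)). apply (HF _ Hin).
  - intros t Ht. assert (Hint : sq c r (w1, t)). split; simpl; auto. apply (between_in (snd p) w2 t); auto.
    destruct (sq_loc c r _ Hint) as [e2 [He2 Hloc]].
    assert (HD := proj1 (proj2 (proj2 (HF _ (HS _ Hint))))).
    intros eps. apply contC with (eps := eps) in HD. 2: apply cond_pos.
    destruct HD as [d [Hd HD]].
    exists (mkposreal (Rmin d e2) (Rmin_pos _ _ Hd He2)). simpl. intros u v Hu Hv.
    assert (Huv : sq c r (u, v)). apply Hloc; simpl. eapply Rlt_le_trans. apply Hu. apply Rmin_r.
      eapply Rlt_le_trans. apply Hv. apply Rmin_r.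
    pose proof (is_derive_unique _ _ _ (proj2 (proj2 (proj2 (proj2 (HF _ (HS _ Huv))))))) as E1.
    pose proof (is_derive_unique _ _ _ (proj2 (proj2 (proj2 (proj2 (HF _ (HS _ Hint))))))) as E2.
    simpl in E1, E2. rewrite E1, E2. apply HD; simpl. eapply Rlt_le_trans. apply Hu. apply Rmin_l.
      eapply Rlt_le_trans. apply Hv. apply Rmin_l.
  - apply locally_R_of with e; auto. intros y Hy.
    apply (exRInt_B Om A B D c r); auto.
  - change (A (w1, snd p) + RInt (fun t => Derive (fun u => B (u,t)) w1) (snd p) w2 = A (w1,w2)). rewrite HI. ring.
Qed.

Lemma J_refl A B p : J A B p p = 0.
Proof. unfold J. rewrite !(@RInt_point R_CompleteNormedModule). unfold zero; simpl. ring. Qed.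

Lemma J_cocycle (Om : C -> Prop) A B D c r p q w :
  closed_form Om A B D -> sqsub Om c r -> sq c r p -> sq c r q -> sq c r w ->
  J A B p q + J A B q w = J A B p w.
Proof.
  intros HF HS Hp Hq Hw.
  set (h := fun x => J A B p x - (J A B p q + J A B q x)).
  assert (Hh : h w = h q).
  { apply (const_sq h c r); auto. intros x Hx. split.
    - eapply is_derive_val.
      apply (is_derive_minus (fun t => J A B p (t, snd x)) (fun t => J A B p q + J A B q (t, snd x))).
      apply (J_du Om A B D c r); auto.
      apply (is_derive_plus (fun _ => J A B p q) (fun t => J A B q (t, snd x))).
      apply is_derive_const. apply (J_du Om A B D c r); auto.
      unfold minus, plus, opp, zero; simpl. ring.
    - eapply is_derive_val.
      apply (is_derive_minus (fun t => J A B p (fst x, t)) (fun t => J A B p q + J A B q (fst x, t))).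
      apply (J_dv Om A B D c r); auto.
      apply (is_derive_plus (fun _ => J A B p q) (fun t => J A B q (fst x, t))).
      apply is_derive_const. apply (J_dv Om A B D c r); auto.
      unfold minus, plus, opp, zero; simpl. ring. }
  unfold h in Hh. rewrite J_refl in Hh. lra.
Qed.

Lemma J_rev (Om : C -> Prop) A B D c r p q :
  closed_form Om A B D -> sqsub Om c r -> sq c r p -> sq c r q ->
  J A B q p = - J A B p q.
Proof.
  intros. pose proof (J_cocycle Om A B D c r p q p H H0 H1 H2 H1). rewrite J_refl in H3. lra.
Qed.

Fixpoint ssum (f : nat -> R) (n : nat) : R :=
  match n with O => 0 | S n => ssum f n + f n end.

Lemma ssum_ext f g n : (forall k, (k < n)%nat -> f k = g k) -> ssum f n = ssum g n.
Proof. induction n; simpl; intros H; auto. rewrite IHn. rewrite H; auto. intros; apply H; lia. Qed.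

Lemma ssum_add f a b : ssum f (a + b) = ssum f a + ssum (fun j => f (a + j)%nat) b.
Proof. induction b; simpl. rewrite Nat.add_0_r; ring. rewrite Nat.add_succ_r. simpl. rewrite IHb. ring. Qed.

Lemma ssum_mul f N M : ssum f (N * M) = ssum (fun k => ssum (fun j => f (k * M + j)%nat) M) N.
Proof. induction N; simpl. auto. rewrite Nat.add_comm, ssum_add, IHN. auto. Qed.

Lemma ssum_shift f n : ssum (fun j => f (S j)) n = ssum f n + f n - f O.
Proof. induction n; simpl. ring. rewrite IHn. ring. Qed.

Lemma ssum_opp f n : ssum (fun k => - f k) n = - ssum f n.
Proof. induction n; simpl. ring. rewrite IHn. ring. Qed.

Lemma ssum_first g n : ssum g (S n) = g O + ssum (fun k => g (S k)) n.
Proof. rewrite ssum_shift. simpl. ring. Qed.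

Lemma ssum_rev f n : ssum f n = ssum (fun k => f (n - S k)%nat) n.
Proof.
  induction n. simpl; auto.
  transitivity (ssum f n + f n). reflexivity. rewrite ssum_first, IHn.
  replace (S n - 1)%nat with n by lia. rewrite Rplus_comm. f_equal.
Qed.

Definition goodblk (Om : C -> Prop) (g : R -> C) (a b : R) : Prop :=
  exists c r, sqsub Om c r /\ forall t, a <= t <= b -> sq c r (g t).

Definition fine (Om : C -> Prop) (g : R -> C) (N : nat) : Prop :=
  (0 < N)%nat /\ forall k, (k < N)%nat -> goodblk Om g (INR k / INR N) (INR (S k) / INR N).

Definition Isum (A B : C -> R) (g : R -> C) (N : nat) : R :=
  ssum (fun k => J A B (g (INR k / INR N)) (g (INR (S k) / INR N))) N.

Lemma J_telescope (Om : C -> Prop) A B D c r (x : nat -> C) M :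
  closed_form Om A B D -> sqsub Om c r -> (forall j, (j <= M)%nat -> sq c r (x j)) ->
  ssum (fun j => J A B (x j) (x (S j))) M = J A B (x O) (x M).
Proof.
  intros HF HS Hx. induction M; simpl. rewrite J_refl; auto.
  rewrite IHM. apply (J_cocycle Om A B D c r); auto; apply Hx; lia. intros; apply Hx; lia.
Qed.

Lemma div_le_div (a b n : R) : 0 < n -> a <= b -> a / n <= b / n.
Proof. intros. unfold Rdiv. apply Rmult_le_compat_r; auto. left; apply Rinv_0_lt_compat; auto. Qed.

Lemma refine_interval N M k k' t : (0 < N)%nat -> (0 < M)%nat -> (k * M <= k')%nat -> (S k' <= S k * M)%nat ->
  INR k' / INR (N * M) <= t <= INR (S k') / INR (N * M) -> INR k / INR N <= t <= INR (S k) / INR N.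
Proof.
  intros HN HM H1 H2 [Ht1 Ht2].
  assert (HN' : 0 < INR N) by (apply lt_0_INR; lia).
  assert (HM' : 0 < INR M) by (apply lt_0_INR; lia).
  apply le_INR in H1. apply le_INR in H2. rewrite mult_INR in H1, H2. rewrite mult_INR in Ht1, Ht2.
  split.
  - replace (INR k / INR N) with (INR k * INR M / (INR N * INR M)) by (field; lra).
    eapply Rle_trans. 2: apply Ht1. apply div_le_div; nra.
  - replace (INR (S k) / INR N) with (INR (S k) * INR M / (INR N * INR M)) by (field; lra).
    eapply Rle_trans. apply Ht2. apply div_le_div; nra.
Qed.

Lemma fine_refine (Om : C -> Prop) A B D g N M :
  closed_form Om A B D -> fine Om g N -> (0 < M)%nat ->
  fine Om g (N * M) /\ Isum A B g (N * M) = Isum A B g N.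
Proof.
  intros HF [HN HB] HM. split.
  - split. lia. intros k' Hk'.
    set (k := (k' / M)%nat). set (j := (k' mod M)%nat).
    assert (Hd : k' = (M * k + j)%nat) by (apply Nat.div_mod; lia).
    assert (Hj : (j < M)%nat) by (apply Nat.mod_upper_bound; lia).
    assert (Hk : (k < N)%nat). { destruct (Nat.lt_ge_cases k N); auto. nia. }
    destruct (HB k Hk) as [c [r [HS Ht]]]. exists c, r. split; auto.
    intros t Ht'. apply Ht. apply (refine_interval N M k k'); auto; nia.
  - unfold Isum. rewrite ssum_mul. apply ssum_ext. intros k Hk.
    destruct (HB k Hk) as [c [r [HS Ht]]].
    set (x := fun j => g (INR (k * M + j) / INR (N * M))).
    transitivity (ssum (fun j => J A B (x j) (x (S j))) M).
    { apply ssum_ext. intros j Hj. unfold x. rewrite Nat.add_succ_r. reflexivity. }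
    rewrite (J_telescope Om A B D c r x M); auto.
    + unfold x. assert (HN' : 0 < INR N) by (apply lt_0_INR; lia).
      assert (HM' : 0 < INR M) by (apply lt_0_INR; lia).
      f_equal; f_equal; rewrite ?plus_INR, !mult_INR, ?S_INR; simpl; field; lra.
    + intros j Hj. unfold x. apply Ht.
      assert (HN' : 0 < INR N) by (apply lt_0_INR; lia).
      assert (HM' : 0 < INR M) by (apply lt_0_INR; lia).
      rewrite plus_INR, !mult_INR, S_INR. apply le_INR in Hj.
      split.
      * replace (INR k / INR N) with (INR k * INR M / (INR N * INR M)) by (field; lra).
        apply div_le_div. nra. pose proof (pos_INR j). lra.
      * replace ((INR k + 1) / INR N) with ((INR k * INR M + INR M) / (INR N * INR M)) by (field; lra).
        apply div_le_div. nra. lra.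
Qed.

Lemma Isum_indep (Om : C -> Prop) A B D g N M :
  closed_form Om A B D -> fine Om g N -> fine Om g M -> Isum A B g N = Isum A B g M.
Proof.
  intros HF H1 H2.
  destruct (fine_refine Om A B D g N M HF H1 (proj1 H2)) as [_ E1].
  destruct (fine_refine Om A B D g M N HF H2 (proj1 H1)) as [_ E2].
  rewrite <- E1, <- E2, Nat.mul_comm. auto.
Qed.

Lemma cell_in_01 i M : (i < M)%nat -> 0 <= INR i / INR M <= 1.
Proof.
  intros H. assert (0 < INR M) by (apply lt_0_INR; lia). apply lt_INR in H. pose proof (pos_INR i).
  split. apply Rmult_le_pos; auto. left; apply Rinv_0_lt_compat; auto.
  replace 1 with (INR M / INR M) by (field; lra). apply div_le_div; lra.
Qed.

Lemma grid (Om : C -> Prop) (F : R * R -> C) :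
  open Om -> (forall p, continuous F p) -> (forall s t, 0 <= s <= 1 -> 0 <= t <= 1 -> Om (F (s, t))) ->
  exists M, (0 < M)%nat /\ forall i j, (i < M)%nat -> (j < M)%nat -> exists c r, sqsub Om c r /\
    forall s t, INR i / INR M <= s <= INR (S i) / INR M -> INR j / INR M <= t <= INR (S j) / INR M ->
      sq c r (F (s, t)).
Proof.
  intros HO HC HIn.
  assert (H : forall u v, exists d : posreal, (0 <= u <= 1 -> 0 <= v <= 1 -> exists c r, sqsub Om c r /\
     forall s t, Rabs (s - u) < 2 * d -> Rabs (t - v) < 2 * d -> sq c r (F (s, t)))).
  { intros u v. destruct (classic (0 <= u <= 1 /\ 0 <= v <= 1)) as [[Hu Hv] | Hn].
    - destruct (openC_iff Om HO _ (HIn u v Hu Hv)) as [r [Hr HrO]].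
      destruct (proj1 (contRRC F (u, v)) (HC (u, v)) r Hr) as [d [Hd Hd']].
      exists (mkposreal (d / 2) ltac:(lra)). intros _ _. exists (F (u, v)), r. split.
      + intros p [H1 H2]. apply HrO; auto.
      + intros s t Hs Ht. simpl in Hs, Ht. apply (Hd' (s, t)); simpl; lra.
    - exists (mkposreal 1 Rlt_0_1). intros Hu Hv. exfalso. apply Hn. auto. }
  set (delta := fun u v => proj1_sig (constructive_indefinite_description _ (H u v))).
  assert (Hdelta : forall u v, 0 <= u <= 1 -> 0 <= v <= 1 -> exists c r, sqsub Om c r /\
     forall s t, Rabs (s - u) < 2 * delta u v -> Rabs (t - v) < 2 * delta u v -> sq c r (F (s, t))).
  { intros u v. unfold delta. destruct (constructive_indefinite_description _ (H u v)) as [d Hd]. simpl. exact Hd. }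
  destruct (compactness_value_2d 0 1 0 1 delta) as [d Hd].
  destruct (archimed_cor1 d (cond_pos d)) as [M [HM HM0]].
  exists M. split; auto. intros i j Hi Hj.
  assert (HMr : 0 < INR M) by (apply lt_0_INR; lia).
  apply NNPP. intro Hn.
  apply (Hd (INR i / INR M) (INR j / INR M) (cell_in_01 i M Hi) (cell_in_01 j M Hj)).
  intros [u [v [Hu [Hv [H1 [H2 H3]]]]]]. apply Hn.
  destruct (Hdelta u v Hu Hv) as [c [r [HS Hsq]]]. exists c, r. split; auto.
  intros s t Hs Ht. apply Hsq.
  - rewrite S_INR in Hs. replace ((INR i + 1) / INR M) with (INR i / INR M + / INR M) in Hs by (field; lra).
    replace (s - u) with ((s - INR i / INR M) + (INR i / INR M - u)) by ring.
    eapply Rle_lt_trans. apply Rabs_triang. rewrite (Rabs_right (s - INR i / INR M)) by lra. lra.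
  - rewrite S_INR in Ht. replace ((INR j + 1) / INR M) with (INR j / INR M + / INR M) in Ht by (field; lra).
    replace (t - v) with ((t - INR j / INR M) + (INR j / INR M - v)) by ring.
    eapply Rle_lt_trans. apply Rabs_triang. rewrite (Rabs_right (t - INR j / INR M)) by lra. lra.
Qed.

Lemma ssum_plus f g n : ssum (fun k => f k + g k) n = ssum f n + ssum g n.
Proof. induction n; simpl. ring. rewrite IHn. ring. Qed.
Lemma ssum_zero n : ssum (fun _ => 0) n = 0.
Proof. induction n; simpl. ring. rewrite IHn. ring. Qed.

Lemma path_fine (Om : C -> Prop) (g : R -> C) :
  open Om -> (forall t, continuous g t) -> (forall t, 0 <= t <= 1 -> Om (g t)) -> exists N, fine Om g N.
Proof.
  intros HO HC HIn.
  destruct (grid Om (fun p => g (snd p)) HO) as [M [HM HG]].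
  - intros p. apply contRRC. intros eps Heps. destruct (proj1 (contRC g (snd p)) (HC _) eps Heps) as [d [Hd H]].
    exists d. split; auto.
  - intros s t _ Ht. apply HIn; auto.
  - exists M. split; auto. intros k Hk. destruct (HG O k HM Hk) as [c [r [HS Hsq]]].
    exists c, r. split; auto. intros t Ht. apply (Hsq 0 t); auto.
    assert (0 < INR M) by (apply lt_0_INR; lia). simpl. split. unfold Rdiv; lra.
    rewrite Rdiv_1_l. left; apply Rinv_0_lt_compat; auto.
Qed.

Lemma INR_div_self M : (0 < M)%nat -> INR M / INR M = 1.
Proof. intros. assert (0 < INR M) by (apply lt_0_INR; lia). field. lra. Qed.
Lemma INR0_div M : INR 0 / INR M = 0.
Proof. simpl. unfold Rdiv. ring. Qed.

Lemma Sdiv_le i M : (0 < M)%nat -> INR i / INR M <= INR (S i) / INR M.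
Proof. intros. assert (0 < INR M) by (apply lt_0_INR; lia). apply div_le_div; auto. rewrite S_INR; lra. Qed.

Lemma loop_zero (Om : C -> Prop) A B D (g : R -> C) N
  (Hm : R * R -> C) :
  open Om -> closed_form Om A B D ->
  (forall p : R * R, continuous Hm p) ->
  (forall s t : R, 0 <= s <= 1 -> 0 <= t <= 1 -> Om (Hm (s, t))) ->
  (forall t : R, 0 <= t <= 1 -> Hm (0, t) = g t) ->
  (forall t : R, 0 <= t <= 1 -> Hm (1, t) = Hm (1, 0)) ->
  (forall s : R, 0 <= s <= 1 -> Hm (s, 0) = Hm (s, 1)) ->
  fine Om g N -> Isum A B g N = 0.
Proof.
  intros HO HF HC HIn H0 H1 Hper HfN.
  destruct (grid Om Hm HO HC HIn) as [M [HM HG]].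
  assert (HMr : 0 < INR M) by (apply lt_0_INR; lia).
  set (p := fun i j => Hm (INR i / INR M, INR j / INR M)).
  assert (Hr01 : forall i, (i <= M)%nat -> 0 <= INR i / INR M <= 1).
  { intros i Hi. apply le_INR in Hi. pose proof (pos_INR i). split.
    apply Rmult_le_pos; auto. left; apply Rinv_0_lt_compat; auto.
    replace 1 with (INR M / INR M) by (field; lra). apply div_le_div; lra. }
  set (R_ := fun i => ssum (fun j => J A B (p i j) (p i (S j))) M).
  assert (Hstep : forall i, (i < M)%nat -> R_ (S i) = R_ i).
  { intros i Hi. set (Cc := fun j => J A B (p i j) (p (S i) j)).
    assert (Hcell : forall j, (j < M)%nat -> Cc j + J A B (p (S i) j) (p (S i) (S j)) = J A B (p i j) (p i (S j)) + Cc (S j)).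
    { intros j Hj. destruct (HG i j Hi Hj) as [c [r [HS Hsq]]].
      pose proof (Sdiv_le i M HM). pose proof (Sdiv_le j M HM).
      unfold Cc, p.
      rewrite (J_cocycle Om A B D c r); try apply Hsq; try lra; auto.
      rewrite (J_cocycle Om A B D c r); try apply Hsq; try lra; auto. }
    assert (E := ssum_ext _ _ M Hcell). rewrite !ssum_plus, ssum_shift in E.
    assert (HCM : Cc M = Cc O).
    { unfold Cc, p. rewrite INR_div_self, INR0_div by auto.
      rewrite <- (Hper (INR i / INR M)), <- (Hper (INR (S i) / INR M)); auto; apply Hr01; lia. }
    unfold R_. lra. }
  assert (HR : forall i, (i <= M)%nat -> R_ i = R_ O).
  { induction i; intros Hi. auto. rewrite Hstep by lia. apply IHi. lia. }
  assert (HRM : R_ M = 0).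
  { unfold R_. rewrite <- (ssum_zero M). apply ssum_ext. intros j Hj. unfold p.
    rewrite INR_div_self by auto. rewrite (H1 (INR j / INR M)), (H1 (INR (S j) / INR M)); try apply Hr01; try lia.
    apply J_refl. }
  assert (HR0 : R_ O = Isum A B g M).
  { unfold R_, Isum. apply ssum_ext. intros j Hj. unfold p. rewrite INR0_div.
    rewrite !H0; auto; apply Hr01; lia. }
  assert (HfM : fine Om g M).
  { split; auto. intros k Hk. destruct (HG O k HM Hk) as [c [r [HS Hsq]]].
    exists c, r. split; auto. intros t Ht. rewrite <- H0.
    apply Hsq; auto. rewrite INR0_div. simpl. split. lra. rewrite Rdiv_1_l. left; apply Rinv_0_lt_compat; auto.
    pose proof (Hr01 k ltac:(lia)). pose proof (Hr01 (S k) ltac:(lia)). lra. }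
  rewrite (Isum_indep Om A B D g N M HF HfN HfM). rewrite <- HR0, <- HRM. symmetry. apply HR. lia.
Qed.

Definition pathIn (Om : C -> Prop) (a b : C) (g : R -> C) : Prop :=
  (forall t, continuous g t) /\ g 0 = a /\ g 1 = b /\ (forall t, 0 <= t <= 1 -> Om (g t)).

Definition concat (g h : R -> C) (t : R) : C := if Rle_dec t (1/2) then g (2 * t) else h (2 * t - 1).
Definition rev (g : R -> C) (t : R) : C := g (1 - t).
Definition seg (a b : C) (t : R) : C := (fst a + t * (fst b - fst a), snd a + t * (snd b - snd a)).

Lemma concat_l g h t : t <= 1/2 -> concat g h t = g (2 * t).
Proof. intros. unfold concat. destruct (Rle_dec t (1/2)); auto. lra. Qed.
Lemma concat_r g h t : g 1 = h 0 -> 1/2 <= t -> concat g h t = h (2 * t - 1).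
Proof. intros E H. unfold concat. destruct (Rle_dec t (1/2)); auto.
  replace t with (1/2) by lra. replace (2 * (1/2)) with 1 by field. rewrite E. f_equal. field. Qed.

Lemma concat_cont g h t : (forall t, continuous g t) -> (forall t, continuous h t) -> g 1 = h 0 ->
  continuous (concat g h) t.
Proof.
  intros Hg Hh E. apply contRC. intros eps Heps.
  destruct (Rtotal_order t (1/2)) as [Hlt | [Heq | Hgt]].
  - destruct (proj1 (contRC g (2 * t)) (Hg _) eps Heps) as [d [Hd H]].
    exists (Rmin (d / 2) (1/2 - t)). split. apply Rmin_pos; lra.
    intros s Hs. pose proof (Rmin_l (d/2) (1/2 - t)). pose proof (Rmin_r (d/2) (1/2 - t)).
    assert (s < 1/2). { apply Rabs_def2 in Hs. lra. }
    rewrite !concat_l by lra. apply H.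
    replace (2 * s - 2 * t) with (2 * (s - t)) by ring. rewrite Rabs_mult, Rabs_right by lra. lra.
  - subst t. destruct (proj1 (contRC g 1) (Hg _) eps Heps) as [d1 [Hd1 H1]].
    destruct (proj1 (contRC h 0) (Hh _) eps Heps) as [d2 [Hd2 H2]].
    exists (Rmin d1 d2 / 2). split. assert (0 < Rmin d1 d2) by (apply Rmin_pos; auto). lra.
    intros s Hs. pose proof (Rmin_l d1 d2). pose proof (Rmin_r d1 d2).
    rewrite (concat_l g h (1/2)) by lra. replace (2 * (1/2)) with 1 by field.
    destruct (Rle_dec s (1/2)).
    + rewrite concat_l by lra. apply H1.
      replace (2 * s - 1) with (2 * (s - 1/2)) by field. rewrite Rabs_mult, (Rabs_right 2) by lra. lra.
    + rewrite concat_r by (auto; lra). rewrite E. apply H2.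
      replace (2 * s - 1 - 0) with (2 * (s - 1/2)) by field. rewrite Rabs_mult, (Rabs_right 2) by lra. lra.
  - destruct (proj1 (contRC h (2 * t - 1)) (Hh _) eps Heps) as [d [Hd H]].
    exists (Rmin (d / 2) (t - 1/2)). split. apply Rmin_pos; lra.
    intros s Hs. pose proof (Rmin_l (d/2) (t - 1/2)). pose proof (Rmin_r (d/2) (t - 1/2)).
    assert (s > 1/2). { apply Rabs_def2 in Hs. lra. }
    rewrite !concat_r by (auto; lra). apply H.
    replace (2 * s - 1 - (2 * t - 1)) with (2 * (s - t)) by ring. rewrite Rabs_mult, (Rabs_right 2) by lra. lra.
Qed.

Lemma rev_cont g t : (forall t, continuous g t) -> continuous (rev g) t.
Proof.
  intros Hg. apply contRC. intros eps Heps. destruct (proj1 (contRC g (1 - t)) (Hg _) eps Heps) as [d [Hd H]].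
  exists d. split; auto. intros s Hs. unfold rev. apply H.
  replace (1 - s - (1 - t)) with (- (s - t)) by ring. rewrite Rabs_Ropp. auto.
Qed.

Lemma seg_cont a b t : continuous (seg a b) t.
Proof.
  apply contRC. intros eps Heps.
  set (K := Rabs (fst b - fst a) + Rabs (snd b - snd a) + 1).
  assert (HK : 0 < K). { unfold K. pose proof (Rabs_pos (fst b - fst a)). pose proof (Rabs_pos (snd b - snd a)). lra. }
  exists (eps / K). split. apply Rdiv_lt_0_compat; auto.
  intros s Hs. unfold seg; simpl.
  assert (Hb : forall x, Rabs x <= K - 1 -> Rabs (fst a + s * x - (fst a + t * x)) < eps).
  { intros x Hx. replace (fst a + s * x - (fst a + t * x)) with ((s - t) * x) by ring.
    rewrite Rabs_mult. pose proof (Rabs_pos x). pose proof (Rabs_pos (s - t)).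
    apply Rle_lt_trans with ((eps / K) * (K - 1)). apply Rmult_le_compat; lra.
    replace (eps / K * (K - 1)) with (eps - eps / K) by (field; lra).
    assert (0 < eps / K) by (apply Rdiv_lt_0_compat; auto). lra. }
  split.
  - apply Hb. unfold K. pose proof (Rabs_pos (snd b - snd a)). lra.
  - replace (snd a + s * (snd b - snd a) - (snd a + t * (snd b - snd a))) with
      (fst a + s * (snd b - snd a) - (fst a + t * (snd b - snd a))) by ring.
    apply Hb. unfold K. pose proof (Rabs_pos (fst b - fst a)). lra.
Qed.

Lemma INR_double N : INR (N + N) = 2 * INR N.
Proof. rewrite plus_INR. ring. Qed.

Lemma fine_concat (Om : C -> Prop) A B g h N :
  g 1 = h 0 -> fine Om g N -> fine Om h N ->
  fine Om (concat g h) (N + N) /\ Isum A B (concat g h) (N + N) = Isum A B g N + Isum A B h N.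
Proof.
  intros E [HN Hg] [_ Hh]. assert (HNr : 0 < INR N) by (apply lt_0_INR; lia).
  split.
  - split. lia. intros k Hk. rewrite INR_double.
    destruct (Nat.lt_ge_cases k N) as [Hk1 | Hk1].
    + destruct (Hg k Hk1) as [c [r [HS Hsq]]]. exists c, r. split; auto. intros t Ht.
      assert (HSk : INR (S k) <= INR N) by (apply le_INR; lia). rewrite S_INR in HSk. rewrite S_INR in Ht.
      rewrite concat_l. apply Hsq. rewrite S_INR. split.
      * replace (INR k / INR N) with (2 * (INR k / (2 * INR N))) by (field; lra). lra.
      * replace ((INR k + 1) / INR N) with (2 * ((INR k + 1) / (2 * INR N))) by (field; lra). lra.
      * apply Rle_trans with ((INR k + 1) / (2 * INR N)). lra.
        replace (1/2) with (INR N / (2 * INR N)) by (field; lra). apply div_le_div; lra.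
    + destruct (Hh (k - N)%nat ltac:(lia)) as [c [r [HS Hsq]]]. exists c, r. split; auto. intros t Ht.
      assert (Hkr : INR k = INR N + INR (k - N)) by (rewrite <- plus_INR; f_equal; lia).
      rewrite S_INR in Ht. rewrite Hkr in Ht.
      rewrite concat_r; auto. apply Hsq. rewrite S_INR. split.
      * replace (INR (k - N) / INR N) with (2 * ((INR N + INR (k - N)) / (2 * INR N)) - 1) by (field; lra). lra.
      * replace ((INR (k - N) + 1) / INR N) with (2 * ((INR N + INR (k - N) + 1) / (2 * INR N)) - 1) by (field; lra). lra.
      * apply Rle_trans with ((INR N + INR (k - N)) / (2 * INR N)). 2: lra.
        replace (1/2) with (INR N / (2 * INR N)) by (field; lra). apply div_le_div. lra. pose proof (pos_INR (k - N)). lra.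
  - unfold Isum. rewrite ssum_add. f_equal.
    + apply ssum_ext. intros k Hk. rewrite INR_double.
      assert (HSk : INR (S k) <= INR N) by (apply le_INR; lia). rewrite !S_INR. rewrite S_INR in HSk.
      pose proof (pos_INR k).
      rewrite !concat_l; try (apply Rle_trans with ((INR N) / (2 * INR N)); [apply div_le_div; lra | right; field; lra]).
      f_equal; f_equal; field; lra.
    + apply ssum_ext. intros j Hj. rewrite INR_double. rewrite !S_INR, !plus_INR.
      pose proof (pos_INR j).
      rewrite !concat_r; auto; try (apply Rle_trans with ((INR N) / (2 * INR N)); [right; field; lra | apply div_le_div; lra]).
      f_equal; f_equal; field; lra.
Qed.

Lemma fine_rev (Om : C -> Prop) A B D g N :
  closed_form Om A B D -> fine Om g N -> fine Om (rev g) N /\ Isum A B (rev g) N = - Isum A B g N.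
Proof.
  intros HF [HN Hg]. assert (HNr : 0 < INR N) by (apply lt_0_INR; lia).
  assert (Hm : forall k, (k < N)%nat -> INR (N - S k) = INR N - INR k - 1).
  { intros k Hk. rewrite minus_INR by lia. rewrite S_INR. ring. }
  split.
  - split; auto. intros k Hk. destruct (Hg (N - S k)%nat ltac:(lia)) as [c [r [HS Hsq]]].
    exists c, r. split; auto. intros t Ht. unfold rev. apply Hsq.
    rewrite S_INR, Hm by auto. rewrite S_INR in Ht. split.
    + replace ((INR N - INR k - 1) / INR N) with (1 - (INR k + 1) / INR N) by (field; lra). lra.
    + replace ((INR N - INR k - 1 + 1) / INR N) with (1 - INR k / INR N) by (field; lra). lra.
  - unfold Isum. rewrite (ssum_rev _ N), <- ssum_opp. apply ssum_ext. intros k Hk.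
    destruct (Hg k Hk) as [c [r [HS Hsq]]].
    cbv beta. unfold rev. rewrite (S_INR (N - S k)), Hm by auto.
    replace (1 - (INR N - INR k - 1) / INR N) with (INR (S k) / INR N) by (rewrite S_INR; field; lra).
    replace (1 - (INR N - INR k - 1 + 1) / INR N) with (INR k / INR N) by (field; lra).
    apply (J_rev Om A B D c r); auto; apply Hsq; pose proof (Sdiv_le k N HN) as HH; lra.
Qed.

Lemma seg_in c r a b t : sq c r a -> sq c r b -> 0 <= t <= 1 -> sq c r (seg a b t).
Proof.
  intros [Ha1 Ha2] [Hb1 Hb2] Ht. unfold seg, sq; simpl.
  assert (K : forall x y z, Rabs (x - z) < r -> Rabs (y - z) < r -> Rabs (x + t * (y - x) - z) < r).
  { intros x y z Hx Hy. replace (x + t * (y - x) - z) with ((1 - t) * (x - z) + t * (y - z)) by ring.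
    eapply Rle_lt_trans. apply Rabs_triang. rewrite !Rabs_mult, (Rabs_right (1 - t)), (Rabs_right t) by lra.
    destruct (Req_dec t 0). subst. lra. nra. }
  split; apply K; auto.
Qed.

Lemma fine_seg (Om : C -> Prop) A B c r a b :
  sqsub Om c r -> sq c r a -> sq c r b -> fine Om (seg a b) 1 /\ Isum A B (seg a b) 1 = J A B a b.
Proof.
  intros HS Ha Hb. split.
  - split. lia. intros k Hk. replace k with O by lia. exists c, r. split; auto.
    intros t Ht. apply seg_in; auto. simpl in Ht. replace (0 / 1) with 0 in Ht by field. replace (1/1) with 1 in Ht by field. lra.
  - unfold Isum. simpl. replace (0 / 1) with 0 by field. replace (1/1) with 1 by field.
    unfold seg. destruct a, b; simpl. rewrite Rplus_0_l. f_equal; f_equal; ring.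
Qed.

Lemma path_indep (Om : C -> Prop) A B D z0 z g1 g2 N1 N2 :
  open Om -> loops_contractible Om -> closed_form Om A B D ->
  pathIn Om z0 z g1 -> pathIn Om z0 z g2 -> fine Om g1 N1 -> fine Om g2 N2 ->
  Isum A B g1 N1 = Isum A B g2 N2.
Proof.
  intros HO HLC HF [Hc1 [H01 [H11 Hi1]]] [Hc2 [H02 [H12 Hi2]]] Hf1 Hf2.
  destruct (fine_refine Om A B D g1 N1 N2 HF Hf1 (proj1 Hf2)) as [Hf1' E1].
  destruct (fine_refine Om A B D g2 N2 N1 HF Hf2 (proj1 Hf1)) as [Hf2' E2].
  rewrite Nat.mul_comm in Hf2', E2. rewrite <- E1, <- E2.
  set (N := (N1 * N2)%nat) in *.
  destruct (fine_rev Om A B D g2 N HF Hf2') as [Hr Er].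
  assert (J1 : g1 1 = rev g2 0). { unfold rev. replace (1 - 0) with 1 by ring. congruence. }
  destruct (fine_concat Om A B g1 (rev g2) N J1 Hf1' Hr) as [Hc Ec].
  set (L := concat g1 (rev g2)) in *.
  assert (HLc : forall t, continuous L t). { intros t. apply concat_cont; auto. intros; apply rev_cont; auto. }
  assert (HL01 : L 0 = L 1).
  { unfold L. rewrite concat_l, concat_r by (auto; lra). unfold rev.
    replace (2 * 0) with 0 by ring. replace (1 - (2 * 1 - 1)) with 0 by ring. congruence. }
  assert (HLi : forall t, 0 <= t <= 1 -> Om (L t)).
  { intros t Ht. unfold L. destruct (Rle_dec t (1/2)).
    rewrite concat_l by auto. apply Hi1. lra. rewrite concat_r by (auto; lra). unfold rev. apply Hi2. lra. }
  destruct (HLC L HLc HLi HL01) as [Hm [HmC [HmI [Hm0 [Hm1 Hmp]]]]].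
  assert (Z := loop_zero Om A B D L (N + N) Hm HO HF HmC HmI Hm0 Hm1 Hmp Hc).
  lra.
Qed.

Lemma concat_path (Om : C -> Prop) a b c g h :
  pathIn Om a b g -> pathIn Om b c h -> pathIn Om a c (concat g h).
Proof.
  intros [Hc1 [H01 [H11 Hi1]]] [Hc2 [H02 [H12 Hi2]]].
  assert (E : g 1 = h 0) by congruence.
  split; [|split; [|split]].
  - intros t. apply concat_cont; auto.
  - rewrite concat_l by lra. replace (2 * 0) with 0 by ring. auto.
  - rewrite concat_r by (auto; lra). replace (2 * 1 - 1) with 1 by ring. auto.
  - intros t Ht. destruct (Rle_dec t (1/2)).
    rewrite concat_l by auto. apply Hi1. lra. rewrite concat_r by (auto; lra). apply Hi2. lra.
Qed.

Definition prim (Om : C -> Prop) (A B : C -> R) (z0 z : C) : R :=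
  epsilon (inhabits 0) (fun r => exists g N, pathIn Om z0 z g /\ fine Om g N /\ Isum A B g N = r).

Lemma prim_spec (Om : C -> Prop) A B D z0 z g N :
  open Om -> loops_contractible Om -> closed_form Om A B D ->
  pathIn Om z0 z g -> fine Om g N -> prim Om A B z0 z = Isum A B g N.
Proof.
  intros HO HLC HF Hp Hf. unfold prim.
  destruct (epsilon_spec (inhabits 0) (fun r => exists g N, pathIn Om z0 z g /\ fine Om g N /\ Isum A B g N = r))
    as [g' [N' [Hp' [Hf' E]]]].
  exists (Isum A B g N), g, N. auto.
  rewrite <- E. apply (path_indep Om A B D z0 z); auto.
Qed.

Lemma prim_local (Om : C -> Prop) A B D z0 z r w :
  open Om -> path_connected Om -> loops_contractible Om -> closed_form Om A B D -> Om z0 ->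
  sqsub Om z r -> sq z r w -> prim Om A B z0 w = prim Om A B z0 z + J A B z w.
Proof.
  intros HO HPC HLC HF Hz0 HS Hw.
  assert (Hzr : sq z r z). { destruct Hw as [Hw _]. split; unfold Rminus; rewrite Rplus_opp_r, Rabs_R0;
    pose proof (Rabs_pos (fst w - fst z)); lra. }
  assert (Hz : Om z) by (apply HS; auto).
  destruct (HPC z0 z Hz0 Hz) as [g [Hgc [Hg0 [Hg1 Hgi]]]].
  assert (Hp : pathIn Om z0 z g) by (repeat split; auto).
  destruct (path_fine Om g HO Hgc Hgi) as [N Hf].
  destruct (fine_seg Om A B z r z w HS Hzr Hw) as [Hs1 Es1].
  destruct (fine_refine Om A B D (seg z w) 1 N HF Hs1 (proj1 Hf)) as [HsN EsN].
  rewrite Nat.mul_1_l in HsN, EsN.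
  assert (Hps : pathIn Om z w (seg z w)).
  { split; [|split; [|split]].
    - intros; apply seg_cont.
    - unfold seg. destruct z; simpl. f_equal; ring.
    - unfold seg. destruct z, w; simpl. f_equal; ring.
    - intros t Ht. apply HS. apply seg_in; auto. }
  assert (J1 : g 1 = seg z w 0). { rewrite Hg1. unfold seg. destruct z; simpl. f_equal; ring. }
  destruct (fine_concat Om A B g (seg z w) N J1 Hf HsN) as [Hcf Ec].
  rewrite (prim_spec Om A B D z0 w (concat g (seg z w)) (N + N)); auto.
  2: apply concat_path with z; auto.
  rewrite (prim_spec Om A B D z0 z g N); auto. rewrite Ec, EsN, Es1. auto.
Qed.

Theorem poincare (Om : C -> Prop) A B D :
  simply_connected_domain Om -> closed_form Om A B D ->
  exists x : C -> R, forall z, Om z ->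
    is_derive (fun t => x (t, snd z)) (fst z) (A z) /\
    is_derive (fun t => x (fst z, t)) (snd z) (B z) /\ continuous x z.
Proof.
  intros [[z0 Hz0] [HO [HPC HLC]]] HF.
  exists (prim Om A B z0). intros z Hz.
  destruct (openC_iff Om HO z Hz) as [r [Hr HrO]].
  assert (HS : sqsub Om z r). { intros p [H1 H2]. apply HrO; auto. }
  assert (Hzr : sq z r z). { split; unfold Rminus; rewrite Rplus_opp_r, Rabs_R0; auto. }
  assert (Hloc := fun w Hw => prim_local Om A B D z0 z r w HO HPC HLC HF Hz0 HS Hw).
  destruct z as [z1 z2]. simpl.
  split; [|split].
  - apply (is_derive_ext_loc (fun t => prim Om A B z0 (z1, z2) + J A B (z1, z2) (t, z2))).
    + apply locally_R_of with r; auto. intros y Hy. symmetry. apply Hloc. split; simpl; auto.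
      unfold Rminus; rewrite Rplus_opp_r, Rabs_R0; auto.
    + eapply is_derive_val.
      apply (is_derive_plus (fun _ => prim Om A B z0 (z1, z2)) (fun t => J A B (z1, z2) (t, z2))).
      apply is_derive_const. apply (J_du Om A B D (z1, z2) r (z1, z2) (z1, z2)); auto.
      unfold plus, zero; simpl; ring.
  - apply (is_derive_ext_loc (fun t => prim Om A B z0 (z1, z2) + J A B (z1, z2) (z1, t))).
    + apply locally_R_of with r; auto. intros y Hy. symmetry. apply Hloc. split; simpl; auto.
      unfold Rminus; rewrite Rplus_opp_r, Rabs_R0; auto.
    + eapply is_derive_val.
      apply (is_derive_plus (fun _ => prim Om A B z0 (z1, z2)) (fun t => J A B (z1, z2) (z1, t))).
      apply is_derive_const. apply (J_dv Om A B D (z1, z2) r (z1, z2) (z1, z2)); auto.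
      unfold plus, zero; simpl; ring.
  - apply contC. intros eps Heps.
    destruct (HF _ Hz) as [HAc [HBc _]].
    destruct (proj1 (contC A _) HAc 1 Rlt_0_1) as [dA [HdA HA]].
    destruct (proj1 (contC B _) HBc 1 Rlt_0_1) as [dB [HdB HB]].
    set (K := Rabs (A (z1, z2)) + Rabs (B (z1, z2)) + 1).
    assert (HK : 0 < K). { unfold K. pose proof (Rabs_pos (A (z1, z2))). pose proof (Rabs_pos (B (z1, z2))). lra. }
    set (rho := Rmin r (Rmin dA dB)).
    assert (Hrho : 0 < rho) by (apply Rmin_pos; auto; apply Rmin_pos; auto).
    assert (Hr1 : rho <= r) by apply Rmin_l.
    assert (Hr2 : rho <= dA) by (eapply Rle_trans; [apply Rmin_r | apply Rmin_l]).
    assert (Hr3 : rho <= dB) by (eapply Rle_trans; [apply Rmin_r | apply Rmin_r]).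
    assert (HAb : forall p, Rabs (fst p - z1) < rho -> Rabs (snd p - z2) < rho -> Rabs (A p) <= K).
    { intros p H1 H2. assert (Rabs (A p - A (z1, z2)) < 1) by (apply HA; simpl; lra).
      unfold K. pose proof (Rabs_pos (B (z1, z2))).
      replace (A p) with ((A p - A (z1, z2)) + A (z1, z2)) by ring. eapply Rle_trans. apply Rabs_triang. lra. }
    assert (HBb : forall p, Rabs (fst p - z1) < rho -> Rabs (snd p - z2) < rho -> Rabs (B p) <= K).
    { intros p H1 H2. assert (Rabs (B p - B (z1, z2)) < 1) by (apply HB; simpl; lra).
      unfold K. pose proof (Rabs_pos (A (z1, z2))).
      replace (B p) with ((B p - B (z1, z2)) + B (z1, z2)) by ring. eapply Rle_trans. apply Rabs_triang. lra. }
    exists (Rmin rho (eps / (2 * K))). split. apply Rmin_pos; auto. apply Rdiv_lt_0_compat; lra.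
    intros [w1 w2] Hw1 Hw2. simpl in Hw1, Hw2.
    pose proof (Rmin_l rho (eps / (2 * K))). pose proof (Rmin_r rho (eps / (2 * K))).
    assert (Hz1 : Rabs (z1 - z1) < rho) by (unfold Rminus; rewrite Rplus_opp_r, Rabs_R0; auto).
    assert (Hz2 : Rabs (z2 - z2) < rho) by (unfold Rminus; rewrite Rplus_opp_r, Rabs_R0; auto).
    rewrite Hloc. 2: split; simpl; lra.
    replace (prim Om A B z0 (z1, z2) + J A B (z1, z2) (w1, w2) - prim Om A B z0 (z1, z2))
      with ((J A B (z1, z2) (w1, w2) - J A B (z1, z2) (w1, z2)) + (J A B (z1, z2) (w1, z2) - J A B (z1, z2) (z1, z2))).
    2: rewrite J_refl; ring.
    assert (L1 : Rabs (J A B (z1, z2) (w1, w2) - J A B (z1, z2) (w1, z2)) <= K * Rabs (w2 - z2)).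
    { apply (lip1d (fun t => J A B (z1, z2) (w1, t)) (fun t => B (w1, t)) z2 w2 K).
      intros t Ht. assert (Ht' : Rabs (t - z2) < rho) by (apply (between_in z2 w2 t z2 rho); auto; lra).
      split.
      - apply (J_dv Om A B D (z1, z2) r (z1, z2) (w1, t)); auto. split; simpl; lra.
      - apply HBb; simpl; lra. }
    assert (L2 : Rabs (J A B (z1, z2) (w1, z2) - J A B (z1, z2) (z1, z2)) <= K * Rabs (w1 - z1)).
    { apply (lip1d (fun t => J A B (z1, z2) (t, z2)) (fun t => A (t, z2)) z1 w1 K).
      intros t Ht. assert (Ht' : Rabs (t - z1) < rho) by (apply (between_in z1 w1 t z1 rho); auto; lra).
      split.
      - apply (J_du Om A B D (z1, z2) r (z1, z2) (t, z2)); auto. split; simpl; lra.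
      - apply HAb; simpl; lra. }
    eapply Rle_lt_trans. apply Rabs_triang.
    assert (K * Rabs (w2 - z2) + K * Rabs (w1 - z1) < eps).
    { assert (K * Rabs (w2 - z2) <= K * (eps / (2 * K))) by (apply Rmult_le_compat_l; lra).
      assert (K * Rabs (w1 - z1) <= K * (eps / (2 * K))) by (apply Rmult_le_compat_l; lra).
      replace (K * (eps / (2 * K))) with (eps / 2) in * by (field; lra).
      assert (K * Rabs (w2 - z2) < K * (eps / (2 * K))) by (apply Rmult_lt_compat_l; lra).
      replace (K * (eps / (2 * K))) with (eps / 2) in * by (field; lra). lra. }
    lra.
Qed.

Lemma const_conn (Om : C -> Prop) (h : C -> R) :
  open Om -> path_connected Om ->
  (forall z, Om z -> is_derive (fun t => h (t, snd z)) (fst z) 0 /\ is_derive (fun t => h (fst z, t)) (snd z) 0) ->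
  forall z w, Om z -> Om w -> h z = h w.
Proof.
  intros HO HPC Hd z w Hz Hw.
  destruct (HPC z w Hz Hw) as [g [Hgc [Hg0 [Hg1 Hgi]]]].
  destruct (path_fine Om g HO Hgc Hgi) as [N [HN HB]].
  assert (HNr : 0 < INR N) by (apply lt_0_INR; lia).
  assert (Hk : forall k, (k <= N)%nat -> h (g (INR k / INR N)) = h z).
  { induction k; intros Hk.
    - rewrite INR0_div, Hg0. auto.
    - rewrite <- IHk by lia. destruct (HB k ltac:(lia)) as [c [r [HS Hsq]]].
      pose proof (Sdiv_le k N HN).
      symmetry. apply (const_sq h c r).
      + intros x Hx. apply Hd. apply HS; auto.
      + apply Hsq; lra.
      + apply Hsq; lra. }
  rewrite <- (Hk N) by lia. rewrite INR_div_self by auto. rewrite Hg1. auto.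
Qed.

Definition pd (Om : C -> Prop) (f fu fv : C -> R) : Prop :=
  forall z, Om z -> is_derive (fun t => f (t, snd z)) (fst z) (fu z) /\ is_derive (fun t => f (fst z, t)) (snd z) (fv z).
Definition contOn (Om : C -> Prop) (f : C -> R) : Prop := forall z, Om z -> continuous f z.
Definition C1p (Om : C -> Prop) (f fu fv : C -> R) : Prop :=
  pd Om f fu fv /\ contOn Om f /\ contOn Om fu /\ contOn Om fv.

Lemma cont_plus (f g : C -> R) z : continuous f z -> continuous g z -> continuous (fun w => f w + g w) z.
Proof. intros. exact (@continuous_plus C_UniformSpace R_AbsRing R_NormedModule f g z H H0). Qed.
Lemma cont_opp (f : C -> R) z : continuous f z -> continuous (fun w => - f w) z.
Proof. intros. exact (@continuous_opp C_UniformSpace R_AbsRing R_NormedModule f z H). Qed.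
Lemma cont_minus (f g : C -> R) z : continuous f z -> continuous g z -> continuous (fun w => f w - g w) z.
Proof. intros. apply cont_plus; auto. apply cont_opp; auto. Qed.
Lemma cont_mult (f g : C -> R) z : continuous f z -> continuous g z -> continuous (fun w => f w * g w) z.
Proof. intros. exact (@continuous_mult C_UniformSpace R_AbsRing f g z H H0). Qed.
Lemma cont_inv (f : C -> R) z : continuous f z -> f z <> 0 -> continuous (fun w => / f w) z.
Proof. intros. apply (continuous_comp f (fun x => / x)). auto. apply continuous_Rinv; auto. Qed.
Lemma cont_const (c : R) z : continuous (fun _ : C => c) z.
Proof. apply continuous_const. Qed.

Lemma locally_line1 (Om : C -> Prop) z : open Om -> Om z -> exists e, 0 < e /\ forall t, Rabs (t - fst z) < e -> Om (t, snd z).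
Proof. intros HO Hz. destruct (openC_iff Om HO z Hz) as [r [Hr H]]. exists r. split; auto. intros t Ht. apply H; simpl; auto.
  unfold Rminus; rewrite Rplus_opp_r, Rabs_R0; auto. Qed.
Lemma locally_line2 (Om : C -> Prop) z : open Om -> Om z -> exists e, 0 < e /\ forall t, Rabs (t - snd z) < e -> Om (fst z, t).
Proof. intros HO Hz. destruct (openC_iff Om HO z Hz) as [r [Hr H]]. exists r. split; auto. intros t Ht. apply H; simpl; auto.
  unfold Rminus; rewrite Rplus_opp_r, Rabs_R0; auto. Qed.

Lemma locally_C_of (Om : C -> Prop) (P : C -> Prop) z : open Om -> Om z -> (forall w, Om w -> P w) -> locally z P.
Proof. intros HO Hz H. destruct (HO z Hz) as [e He]. exists e. intros y Hy. apply H, He, Hy. Qed.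

Lemma pd_du (Om : C -> Prop) f fu fv z : pd Om f fu fv -> Om z -> du f z = fu z.
Proof. intros H Hz. unfold du. apply is_derive_unique. apply (H z Hz). Qed.
Lemma pd_dv (Om : C -> Prop) f fu fv z : pd Om f fu fv -> Om z -> dv f z = fv z.
Proof. intros H Hz. unfold dv. apply is_derive_unique. apply (H z Hz). Qed.

Lemma C1p_C1 (Om : C -> Prop) f fu fv : open Om -> C1p Om f fu fv -> C1_on Om f.
Proof.
  intros HO [Hpd [Hf [Hfu Hfv]]] z Hz. split; [|split; [|split; [|split]]].
  - exists (fu z). apply Hpd; auto.
  - exists (fv z). apply Hpd; auto.
  - auto.
  - apply (continuous_ext_loc _ fu). apply (locally_C_of Om); auto. intros w Hw. symmetry. apply (pd_du Om f fu fv); auto. auto.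
  - apply (continuous_ext_loc _ fv). apply (locally_C_of Om); auto. intros w Hw. symmetry. apply (pd_dv Om f fu fv); auto. auto.
Qed.

Lemma C1_C1p (Om : C -> Prop) f : C1_on Om f -> C1p Om f (du f) (dv f).
Proof.
  intros H. split; [|split; [|split]].
  - intros z Hz. destruct (H z Hz) as [H1 [H2 _]]. split; apply Derive_correct; auto.
  - intros z Hz. destruct (H z Hz) as [_ [_ [H3 [H4 H5]]]]; auto.
  - intros z Hz. destruct (H z Hz) as [_ [_ [H3 [H4 H5]]]]; auto.
  - intros z Hz. destruct (H z Hz) as [_ [_ [H3 [H4 H5]]]]; auto.
Qed.

Lemma C1p_ext (Om : C -> Prop) f g gu gv : open Om -> (forall z, Om z -> f z = g z) -> C1p Om g gu gv -> C1p Om f gu gv.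
Proof.
  intros HO E [Hpd [Hg [Hgu Hgv]]]. split; [|split; [|split]]; auto.
  - intros z Hz. split.
    + apply (is_derive_ext_loc (fun t => g (t, snd z))). 2: apply Hpd; auto.
      destruct (locally_line1 Om z HO Hz) as [e [He H]]. apply locally_R_of with e; auto. intros; symmetry; apply E; auto.
    + apply (is_derive_ext_loc (fun t => g (fst z, t))). 2: apply Hpd; auto.
      destruct (locally_line2 Om z HO Hz) as [e [He H]]. apply locally_R_of with e; auto. intros; symmetry; apply E; auto.
  - intros z Hz. apply (continuous_ext_loc _ g). apply (locally_C_of Om); auto. intros w Hw; symmetry; apply E; auto. apply Hg; auto.
Qed.

Lemma C1p_plus (Om : C -> Prop) f fu fv g gu gv : C1p Om f fu fv -> C1p Om g gu gv ->
  C1p Om (fun z => f z + g z) (fun z => fu z + gu z) (fun z => fv z + gv z).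
Proof.
  intros [Hf [Hfc [Hfu Hfv]]] [Hg [Hgc [Hgu Hgv]]]. split; [|split; [|split]]; intros z Hz; try (apply cont_plus; auto).
  destruct (Hf z Hz), (Hg z Hz). split.
  - exact (is_derive_plus _ _ _ _ _ H H1).
  - exact (is_derive_plus _ _ _ _ _ H0 H2).
Qed.

Lemma C1p_minus (Om : C -> Prop) f fu fv g gu gv : C1p Om f fu fv -> C1p Om g gu gv ->
  C1p Om (fun z => f z - g z) (fun z => fu z - gu z) (fun z => fv z - gv z).
Proof.
  intros [Hf [Hfc [Hfu Hfv]]] [Hg [Hgc [Hgu Hgv]]]. split; [|split; [|split]]; intros z Hz; try (apply cont_minus; auto).
  destruct (Hf z Hz), (Hg z Hz). split.
  - exact (is_derive_minus _ _ _ _ _ H H1).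
  - exact (is_derive_minus _ _ _ _ _ H0 H2).
Qed.

Lemma C1p_mult (Om : C -> Prop) f fu fv g gu gv : C1p Om f fu fv -> C1p Om g gu gv ->
  C1p Om (fun z => f z * g z) (fun z => fu z * g z + f z * gu z) (fun z => fv z * g z + f z * gv z).
Proof.
  intros [Hf [Hfc [Hfu Hfv]]] [Hg [Hgc [Hgu Hgv]]]. split; [|split; [|split]]; intros z Hz;
    try (repeat (apply cont_plus || apply cont_mult); auto).
  destruct z as [u v]. destruct (Hf _ Hz), (Hg _ Hz). simpl in *. split.
  - exact (is_derive_mult _ _ _ _ _ H H1 Rmult_comm).
  - exact (is_derive_mult _ _ _ _ _ H0 H2 Rmult_comm).
Qed.

Lemma C1p_inv (Om : C -> Prop) f fu fv : C1p Om f fu fv -> (forall z, Om z -> f z <> 0) ->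
  C1p Om (fun z => / f z) (fun z => - fu z / f z ^ 2) (fun z => - fv z / f z ^ 2).
Proof.
  intros [Hf [Hfc [Hfu Hfv]]] Hnz. split; [|split; [|split]]; intros z Hz.
  - destruct z as [u v]. destruct (Hf _ Hz). simpl in *. split.
    + apply (is_derive_inv (fun t => f (t, v))); auto.
    + apply (is_derive_inv (fun t => f (u, t))); auto.
  - apply cont_inv; auto.
  - apply cont_mult. apply cont_opp; auto. apply cont_inv. apply cont_mult; auto. apply cont_mult; auto. apply cont_const.
    simpl. rewrite Rmult_1_r. apply Rmult_integral_contrapositive; auto.
  - apply cont_mult. apply cont_opp; auto. apply cont_inv. apply cont_mult; auto. apply cont_mult; auto. apply cont_const.
    simpl. rewrite Rmult_1_r. apply Rmult_integral_contrapositive; auto.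
Qed.

Definition mm (a b : C -> R) z := a z * a z + b z * b z.
Definition A1f (a b Pu Pv Qu Qv : C -> R) z := (a z * Pu z - b z * Pv z) * / (a z * a z + b z * b z) + a z * Qu z + b z * Qv z.
Definition B1f (a b Pu Pv Qu Qv : C -> R) z := (b z * Pu z + a z * Pv z) * / (a z * a z + b z * b z) - b z * Qu z + a z * Qv z.
Definition A2f (a b Pu Pv Qu Qv : C -> R) z := (b z * Pu z + a z * Pv z) * / (a z * a z + b z * b z) + b z * Qu z - a z * Qv z.
Definition B2f (a b Pu Pv Qu Qv : C -> R) z := (b z * Pv z - a z * Pu z) * / (a z * a z + b z * b z) + a z * Qu z + b z * Qv z.

Ltac closure1 := match goal with
 | |- C1p _ (fun z => _ + _) _ _ => eapply C1p_plus
 | |- C1p _ (fun z => _ - _) _ _ => eapply C1p_minus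
 | |- C1p _ (fun z => _ * _) _ _ => eapply C1p_mult
 | |- C1p _ (fun z => / _) _ _ => eapply C1p_inv
 | |- C1p _ _ _ _ => eassumption
 | |- forall z, _ -> _ <> 0 => eassumption
end.
Ltac closure := repeat closure1.

Lemma formG (Om : C -> Prop) (a au av b bu bv Pu Pv Puu Puv Pvu Pvv Qu Qv Quu Quv Qvu Qvv : C -> R) :
  C1p Om a au av -> C1p Om b bu bv -> C1p Om Pu Puu Puv -> C1p Om Pv Pvu Pvv -> C1p Om Qu Quu Quv -> C1p Om Qv Qvu Qvv ->
  (forall z, Om z -> a z * a z + b z * b z <> 0) ->
  (forall z, Om z -> au z = bv z) -> (forall z, Om z -> bu z = - av z) ->
  (forall z, Om z -> Puv z = Pvu z) -> (forall z, Om z -> Quv z = Qvu z) ->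
  (forall z, Om z -> Puu z + Pvv z = (a z * a z + b z * b z) * (Quu z + Qvv z)) ->
  exists A1u A1v B1u B1v A2u A2v B2u B2v,
    C1p Om (A1f a b Pu Pv Qu Qv) A1u A1v /\ C1p Om (B1f a b Pu Pv Qu Qv) B1u B1v /\
    C1p Om (A2f a b Pu Pv Qu Qv) A2u A2v /\ C1p Om (B2f a b Pu Pv Qu Qv) B2u B2v /\
    (forall z, Om z -> A1v z = B1u z /\ A1u z + B1v z = 2 * a z * (Quu z + Qvv z) /\
                       A2v z = B2u z /\ A2u z + B2v z = 2 * b z * (Quu z + Qvv z)).
Proof.
  intros Ca Cb CPu CPv CQu CQv Hm HCR1 HCR2 HSP HSQ HL.
  do 8 eexists. split; [|split; [|split; [|split]]].
  - unfold A1f. closure.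
  - unfold B1f. closure.
  - unfold A2f. closure.
  - unfold B2f. closure.
  - intros z Hz. cbv beta.
    rewrite <- (HCR1 z Hz), (HCR2 z Hz), (HSP z Hz), (HSQ z Hz).
    assert (E : Pvv z = (a z * a z + b z * b z) * (Quu z + Qvv z) - Puu z) by (rewrite <- (HL z Hz); ring).
    rewrite E. pose proof (Hm z Hz).
    repeat split; field; auto.
Qed.

Lemma du_ext (f g : C -> R) z : (forall w, f w = g w) -> du f z = du g z.
Proof. intros H. unfold du. apply Derive_ext. intros; apply H. Qed.
Lemma dv_ext (f g : C -> R) z : (forall w, f w = g w) -> dv f z = dv g z.
Proof. intros H. unfold dv. apply Derive_ext. intros; apply H. Qed.
Lemma du_scal (f : C -> R) k z : du (fun w => k * f w) z = k * du f z.
Proof. unfold du. apply Derive_scal. Qed.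
Lemma dv_scal (f : C -> R) k z : dv (fun w => k * f w) z = k * dv f z.
Proof. unfold dv. apply Derive_scal. Qed.
Lemma du_zero z : du (fun _ => 0) z = 0.
Proof. unfold du. apply Derive_const. Qed.
Lemma dv_zero z : dv (fun _ => 0) z = 0.
Proof. unfold dv. apply Derive_const. Qed.

Lemma dz_eq (f : C -> R) w : dz f w = (du f w / 2, - dv f w / 2).
Proof.
  unfold dz, dzC, duC, dvC. unfold Re, Im, RtoC; simpl.
  rewrite du_zero, dv_zero.
  unfold Cmult, Cminus, Cplus, Copp, Ci; simpl. change (fun w0 : C => f w0) with f. apply injective_projections; simpl; field.
Qed.

Lemma dzdzb_eq (f : C -> R) w :
  dzdzb f w = ((du (du f) w + dv (dv f) w) / 4, (dv (du f) w - du (dv f) w) / 4).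
Proof.
  unfold dzdzb, dzbC, duC, dvC.
  rewrite (du_ext (fun w0 => Re (dz f w0)) (fun w0 => /2 * du f w0)) by (intros; rewrite dz_eq; simpl; field).
  rewrite (du_ext (fun w0 => Im (dz f w0)) (fun w0 => (- /2) * dv f w0)) by (intros; rewrite dz_eq; simpl; field).
  rewrite (dv_ext (fun w0 => Re (dz f w0)) (fun w0 => /2 * du f w0)) by (intros; rewrite dz_eq; simpl; field).
  rewrite (dv_ext (fun w0 => Im (dz f w0)) (fun w0 => (- /2) * dv f w0)) by (intros; rewrite dz_eq; simpl; field).
  rewrite !du_scal, !dv_scal.
  unfold Cmult, Cplus, Ci, RtoC; simpl. apply injective_projections; simpl; field.
Qed.

Lemma Cmod2 (w : C) : Cmod w ^ 2 = fst w * fst w + snd w * snd w.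
Proof. unfold Cmod. rewrite pow2_sqrt. ring. nra. Qed.

Lemma cont_2d (F : C -> R) x y : continuous F (x, y) -> continuity_2d_pt (fun u v => F (u, v)) x y.
Proof.
  intros H eps. destruct (proj1 (contC F (x, y)) H eps (cond_pos eps)) as [d [Hd H']].
  exists (mkposreal d Hd). intros u v Hu Hv. apply (H' (u, v)); simpl; auto.
Qed.

Lemma schwarz_C2 (Om : C -> Prop) (P : C -> R) z : open Om -> C2_on Om P -> Om z -> dv (du P) z = du (dv P) z.
Proof.
  intros HO [H0 [Hu Hv]] Hz. destruct z as [x y].
  symmetry.
  destruct (openC_iff Om HO _ Hz) as [r [Hr HrO]].
  pose proof (Schwarz (fun u v => P (u, v)) x y) as HS.
  unfold du, dv; simpl. apply HS.
  - exists (mkposreal r Hr). intros u v H1 H2. simpl in H1, H2.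
    assert (Hin : Om (u, v)) by (apply HrO; simpl; auto).
    destruct (H0 _ Hin) as [E1 [E2 _]]. destruct (Hu _ Hin) as [_ [E3 _]]. destruct (Hv _ Hin) as [E4 _].
    simpl in *. auto.
  - destruct (Hv _ Hz) as [_ [_ [_ [C1 _]]]]. apply cont_2d in C1. exact C1.
  - destruct (Hu _ Hz) as [_ [_ [_ [_ C2]]]]. apply cont_2d in C2. exact C2.
Qed.

Lemma lor_scal4 (c : C) (X : C4) : lor (scal4 c X) (scal4 c X) = Cmult (Cmult c c) (lor X X).
Proof.
  destruct X as [[[x1 x2] x3] x4]. destruct c as [c1 c2], x1, x2, x3, x4.
  unfold lor, Cminus, Cdiv, scal4, Cmult, Cplus, Cminus, Copp; simpl. apply injective_projections; simpl; ring.
Qed.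

Lemma Cmult_0_aux (c d : C) : Cmult c (Cmult d (RtoC 0)) = RtoC 0.
Proof. destruct c, d. unfold Cmult, RtoC; simpl. f_equal; ring. Qed.

Lemma uniq1 (Om : C -> Prop) (f x xu xv : C -> R) z0 :
  open Om -> path_connected Om -> Om z0 -> partials_exist_on Om f -> pd Om x xu xv ->
  (forall z, Om z -> dz f z = dz x z) -> exists c, forall z, Om z -> f z = x z + c.
Proof.
  intros HO HPC Hz0 Hf Hx E.
  exists (f z0 - x z0). intros z Hz.
  assert (H : (fun w => f w - x w) z = (fun w => f w - x w) z0).
  { apply (const_conn Om (fun w => f w - x w)); auto. intros w Hw.
    pose proof (E w Hw) as Ew. rewrite !dz_eq in Ew.
    assert (E1 : du f w = du x w) by (apply (f_equal fst) in Ew; simpl in Ew; lra).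
    assert (E2 : dv f w = dv x w) by (apply (f_equal snd) in Ew; simpl in Ew; lra).
    rewrite (pd_du Om x xu xv) in E1 by auto. rewrite (pd_dv Om x xu xv) in E2 by auto.
    destruct (Hf w Hw) as [Hf1 Hf2]. destruct (Hx w Hw) as [Hx1 Hx2]. split.
    - eapply is_derive_val. apply (is_derive_minus (fun t => f (t, snd w)) (fun t => x (t, snd w))).
      apply Derive_correct; auto. exact Hx1. unfold minus, plus, opp; simpl. unfold du in E1. rewrite E1. ring.
    - eapply is_derive_val. apply (is_derive_minus (fun t => f (fst w, t)) (fun t => x (fst w, t))).
      apply Derive_correct; auto. exact Hx2. unfold minus, plus, opp; simpl. unfold dv in E2. rewrite E2. ring. }
  simpl in H. lra.
Qed.

Ltac pair_eq := match goal with
  | |- (_, _) = (_, _) => f_equal; [pair_eq | pair_eq]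
  | _ => idtac end.

Theorem mainTheorem5 (Omega : C -> Prop) (g : C -> C) (P Q : C -> R) :
  simply_connected_domain Omega ->
  weierstrass_first_kind Omega g P Q ->
  exists x1 x2 x3 x4 : C -> R,
    (* X is C^2 on Omega and has the prescribed X_z *)
    (C2_on Omega x1 /\ C2_on Omega x2 /\ C2_on Omega x3 /\ C2_on Omega x4) /\
    (forall z, Omega z -> Xz x1 x2 x3 x4 z = WformulaXz g P Q z) /\
    (* uniqueness up to an additive constant vector *)
    (forall y1 y2 y3 y4 : C -> R,
        partials_exist_on Omega y1 -> partials_exist_on Omega y2 ->
        partials_exist_on Omega y3 -> partials_exist_on Omega y4 ->
        (forall z, Omega z -> Xz y1 y2 y3 y4 z = WformulaXz g P Q z) ->
        exists c1 c2 c3 c4 : R, forall z, Omega z ->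
          y1 z = x1 z + c1 /\ y2 z = x2 z + c2 /\
          y3 z = x3 z + c3 /\ y4 z = x4 z + c4) /\
    (* (i) *)
    (forall z, Omega z -> Xzzb x1 x2 x3 x4 z = scal4 (dzdzb Q z) (Gvec g z)) /\
    (* (ii) *)
    (exists c3 c4 : R, forall z, Omega z ->
        x3 z = P z - Q z + c3 /\ x4 z = P z + Q z + c4) /\
    (* (iii) *)
    (forall z, Omega z ->
        lor (Gvec g z) (Gvec g z) = RtoC 0 /\
        lor (Xz x1 x2 x3 x4 z) (Gvec g z) = RtoC 0) /\
    (* (iv) *)
    (forall z, Omega z ->
        conformal_spacelike_at x1 x2 x3 x4 z /\
        Lambda x1 x2 x3 x4 z =
          RtoC (4 / (Cmod (g z) ^ 2) *
                Cmod (Cminus (dz P z) (Cmult (Cabs2 (g z)) (dz Q z))) ^ 2)) /\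
    (* (v) marginally trapped *)
    (forall z, Omega z ->
        lor (meanH x1 x2 x3 x4 z) (meanH x1 x2 x3 x4 z) = RtoC 0).
Proof.
  intros HSC HW.
  pose proof HSC as [[z0 Hz0] [HO [HPC HLC]]].
  destruct HW as [[Ha2 Hb2] [HP2 [HQ2 [Hgnz [Hhol [Hlap Hnd]]]]]].
  set (a := fun w => Re (g w)) in *. set (b := fun w => Im (g w)) in *.
  assert (Hg_eq : forall z, g z = (a z, b z)). { intros z. unfold a, b, Re, Im. apply surjective_pairing. }
  pose proof HP2 as [HP0 [HPu HPv]]. pose proof HQ2 as [HQ0 [HQu HQv]].
  destruct Ha2 as [Ha0 _]. destruct Hb2 as [Hb0 _].
  pose proof (C1_C1p _ _ Ha0) as Ca. pose proof (C1_C1p _ _ Hb0) as Cb.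
  pose proof (C1_C1p _ _ HP0) as CP. pose proof (C1_C1p _ _ HQ0) as CQ.
  pose proof (C1_C1p _ _ HPu) as CPu. pose proof (C1_C1p _ _ HPv) as CPv.
  pose proof (C1_C1p _ _ HQu) as CQu. pose proof (C1_C1p _ _ HQv) as CQv.
  assert (Hm : forall z, Omega z -> a z * a z + b z * b z <> 0).
  { intros z Hz Hc. apply (Hgnz z Hz). rewrite Hg_eq. unfold RtoC. f_equal; nra. }
  assert (Hcr : forall z, Omega z -> du a z = dv b z /\ du b z = - dv a z).
  { intros z Hz. pose proof (Hhol z Hz) as E. unfold dzbC, duC, dvC, Cmult, Cplus, Ci, RtoC in E.
    simpl in E. fold a b in E. split.
    - apply (f_equal fst) in E. simpl in E. lra.
    - apply (f_equal snd) in E. simpl in E. lra. }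
  assert (HSP : forall z, Omega z -> dv (du P) z = du (dv P) z) by (intros; apply schwarz_C2 with Omega; auto).
  assert (HSQ : forall z, Omega z -> dv (du Q) z = du (dv Q) z) by (intros; apply schwarz_C2 with Omega; auto).
  assert (HL : forall z, Omega z -> du (du P) z + dv (dv P) z = (a z * a z + b z * b z) * (du (du Q) z + dv (dv Q) z)).
  { intros z Hz. pose proof (Hlap z Hz) as E. rewrite !dzdzb_eq in E. unfold Cabs2 in E. rewrite Cmod2, Hg_eq in E.
    unfold Cmult, RtoC in E. apply (f_equal fst) in E. simpl in E. lra. }
  destruct (formG Omega a (du a) (dv a) b (du b) (dv b) (du P) (dv P) (du (du P)) (dv (du P)) (du (dv P)) (dv (dv P))
              (du Q) (dv Q) (du (du Q)) (dv (du Q)) (du (dv Q)) (dv (dv Q)) Ca Cb CPu CPv CQu CQv Hm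
              (fun z Hz => proj1 (Hcr z Hz)) (fun z Hz => proj2 (Hcr z Hz)) HSP HSQ HL)
    as [A1u [A1v [B1u [B1v [A2u [A2v [B2u [B2v [CA1 [CB1 [CA2 [CB2 Hid]]]]]]]]]]]].
  set (A1 := A1f a b (du P) (dv P) (du Q) (dv Q)) in *.
  set (B1 := B1f a b (du P) (dv P) (du Q) (dv Q)) in *.
  set (A2 := A2f a b (du P) (dv P) (du Q) (dv Q)) in *.
  set (B2 := B2f a b (du P) (dv P) (du Q) (dv Q)) in *.
  assert (HF1 : closed_form Omega A1 B1 B1u).
  { intros z Hz. destruct CA1 as [pA [cA [cAu cAv]]]. destruct CB1 as [pB [cB [cBu cBv]]].
    split; [|split; [|split; [|split]]]; auto.
    - rewrite <- (proj1 (Hid z Hz)). apply pA; auto.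
    - apply pB; auto. }
  assert (HF2 : closed_form Omega A2 B2 B2u).
  { intros z Hz. destruct CA2 as [pA [cA [cAu cAv]]]. destruct CB2 as [pB [cB [cBu cBv]]].
    split; [|split; [|split; [|split]]]; auto.
    - rewrite <- (proj1 (proj2 (proj2 (Hid z Hz)))). apply pA; auto.
    - apply pB; auto. }
  destruct (poincare Omega A1 B1 B1u HSC HF1) as [x1 Hx1].
  destruct (poincare Omega A2 B2 B2u HSC HF2) as [x2 Hx2].
  set (x3 := fun z => P z - Q z). set (x4 := fun z => P z + Q z).
  assert (CX1 : C1p Omega x1 A1 B1).
  { destruct CA1 as [_ [cA _]]. destruct CB1 as [_ [cB _]]. split; [|split; [|split]]; auto;
      intros z Hz; destruct (Hx1 z Hz) as [H1 [H2 H3]]; auto. }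
  assert (CX2 : C1p Omega x2 A2 B2).
  { destruct CA2 as [_ [cA _]]. destruct CB2 as [_ [cB _]]. split; [|split; [|split]]; auto;
      intros z Hz; destruct (Hx2 z Hz) as [H1 [H2 H3]]; auto. }
  assert (CX1u : C1p Omega (du x1) A1u A1v).
  { apply (C1p_ext Omega _ A1); auto. intros z Hz; apply (pd_du Omega x1 A1 B1); auto. apply CX1. }
  assert (CX1v : C1p Omega (dv x1) B1u B1v).
  { apply (C1p_ext Omega _ B1); auto. intros z Hz; apply (pd_dv Omega x1 A1 B1); auto. apply CX1. }
  assert (CX2u : C1p Omega (du x2) A2u A2v).
  { apply (C1p_ext Omega _ A2); auto. intros z Hz; apply (pd_du Omega x2 A2 B2); auto. apply CX2. }
  assert (CX2v : C1p Omega (dv x2) B2u B2v).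
  { apply (C1p_ext Omega _ B2); auto. intros z Hz; apply (pd_dv Omega x2 A2 B2); auto. apply CX2. }
  pose proof (C1p_minus _ _ _ _ _ _ _ CP CQ) as CX3.
  pose proof (C1p_plus _ _ _ _ _ _ _ CP CQ) as CX4.
  fold x3 in CX3. fold x4 in CX4.
  assert (CX3u : C1p Omega (du x3) (fun z => du (du P) z - du (du Q) z) (fun z => dv (du P) z - dv (du Q) z)).
  { eapply (C1p_ext Omega _ (fun z => du P z - du Q z)); auto. intros z Hz; apply (pd_du Omega x3 _ _ z (proj1 CX3)); auto.
    apply C1p_minus; auto. }
  assert (CX3v : C1p Omega (dv x3) (fun z => du (dv P) z - du (dv Q) z) (fun z => dv (dv P) z - dv (dv Q) z)).
  { eapply (C1p_ext Omega _ (fun z => dv P z - dv Q z)); auto. intros z Hz; apply (pd_dv Omega x3 _ _ z (proj1 CX3)); auto.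
    apply C1p_minus; auto. }
  assert (CX4u : C1p Omega (du x4) (fun z => du (du P) z + du (du Q) z) (fun z => dv (du P) z + dv (du Q) z)).
  { eapply (C1p_ext Omega _ (fun z => du P z + du Q z)); auto. intros z Hz; apply (pd_du Omega x4 _ _ z (proj1 CX4)); auto.
    apply C1p_plus; auto. }
  assert (CX4v : C1p Omega (dv x4) (fun z => du (dv P) z + du (dv Q) z) (fun z => dv (dv P) z + dv (dv Q) z)).
  { eapply (C1p_ext Omega _ (fun z => dv P z + dv Q z)); auto. intros z Hz; apply (pd_dv Omega x4 _ _ z (proj1 CX4)); auto.
    apply C1p_plus; auto. }
  assert (D1 : forall z, Omega z -> du x1 z = A1 z /\ dv x1 z = B1 z /\ du x2 z = A2 z /\ dv x2 z = B2 z /\ du x3 z = du P z - du Q z /\ dv x3 z = dv P z - dv Q z /\ du x4 z = du P z + du Q z /\ dv x4 z = dv P z + dv Q z).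
  { intros z Hz. repeat split.
    apply (pd_du _ _ _ _ _ (proj1 CX1) Hz). apply (pd_dv _ _ _ _ _ (proj1 CX1) Hz).
    apply (pd_du _ _ _ _ _ (proj1 CX2) Hz). apply (pd_dv _ _ _ _ _ (proj1 CX2) Hz).
    apply (pd_du _ _ _ _ _ (proj1 CX3) Hz). apply (pd_dv _ _ _ _ _ (proj1 CX3) Hz).
    apply (pd_du _ _ _ _ _ (proj1 CX4) Hz). apply (pd_dv _ _ _ _ _ (proj1 CX4) Hz). }
  assert (HXz : forall z, Omega z -> Xz x1 x2 x3 x4 z = WformulaXz g P Q z).
  { intros z Hz. destruct (D1 z Hz) as [E1 [E2 [E3 [E4 [E5 [E6 [E7 E8]]]]]]].
    pose proof (Hm z Hz) as Hmz.
    unfold Xz, WformulaXz. rewrite !dz_eq, E1, E2, E3, E4, E5, E6, E7, E8, Hg_eq.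
    unfold A1, B1, A2, B2, A1f, B1f, A2f, B2f, add4, scal4, Cmult, Cplus, Cinv, Cdiv, Copp, Ci, RtoC. simpl.
    pair_eq; field; auto. }
  assert (HXzzb : forall z, Omega z -> Xzzb x1 x2 x3 x4 z = scal4 (dzdzb Q z) (Gvec g z)).
  { intros z Hz. unfold Xzzb. rewrite !dzdzb_eq.
    rewrite (pd_du _ _ _ _ _ (proj1 CX1u) Hz), (pd_dv _ _ _ _ _ (proj1 CX1u) Hz),
            (pd_du _ _ _ _ _ (proj1 CX1v) Hz), (pd_dv _ _ _ _ _ (proj1 CX1v) Hz).
    rewrite (pd_du _ _ _ _ _ (proj1 CX2u) Hz), (pd_dv _ _ _ _ _ (proj1 CX2u) Hz),
            (pd_du _ _ _ _ _ (proj1 CX2v) Hz), (pd_dv _ _ _ _ _ (proj1 CX2v) Hz).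
    rewrite (pd_du _ _ _ _ _ (proj1 CX3u) Hz), (pd_dv _ _ _ _ _ (proj1 CX3u) Hz),
            (pd_du _ _ _ _ _ (proj1 CX3v) Hz), (pd_dv _ _ _ _ _ (proj1 CX3v) Hz).
    rewrite (pd_du _ _ _ _ _ (proj1 CX4u) Hz), (pd_dv _ _ _ _ _ (proj1 CX4u) Hz),
            (pd_du _ _ _ _ _ (proj1 CX4v) Hz), (pd_dv _ _ _ _ _ (proj1 CX4v) Hz).
    destruct (Hid z Hz) as [I1 [I2 [I3 I4]]]. rewrite I1, I3.
    assert (I2' : A1u z = 2 * a z * (du (du Q) z + dv (dv Q) z) - B1v z) by lra.
    assert (I4' : A2u z = 2 * b z * (du (du Q) z + dv (dv Q) z) - B2v z) by lra.
    assert (E : dv (dv P) z = (a z * a z + b z * b z) * (du (du Q) z + dv (dv Q) z) - du (du P) z)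
      by (rewrite <- (HL z Hz); ring).
    rewrite I2', I4', E, (HSQ z Hz), (HSP z Hz).
    unfold Gvec, scal4, Cmult, RtoC. rewrite Cmod2, Hg_eq. unfold Re, Im. simpl.
    pair_eq; field. }
  assert (HGG : forall z, Omega z -> lor (Gvec g z) (Gvec g z) = RtoC 0).
  { intros z Hz. unfold lor, Cminus, Cdiv, Gvec, Cmult, Cplus, Cminus, Copp, RtoC. rewrite Cmod2, Hg_eq. unfold Re, Im. simpl.
    pair_eq; field. }
  exists x1, x2, x3, x4.
  split.
  { split; [|split; [|split]]; (split; [|split]); eapply C1p_C1; eauto. }
  split; [exact HXz|].
  split.
  { intros y1 y2 y3 y4 Hy1 Hy2 Hy3 Hy4 HXy.
    assert (Eq : forall z, Omega z -> dz y1 z = dz x1 z /\ dz y2 z = dz x2 z /\ dz y3 z = dz x3 z /\ dz y4 z = dz x4 z).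
    { intros z Hz. pose proof (HXy z Hz) as E. rewrite <- (HXz z Hz) in E. unfold Xz in E. pose proof (f_equal (fun t => fst (fst (fst t))) E) as e1; pose proof (f_equal (fun t => snd (fst (fst t))) E) as e2; pose proof (f_equal (fun t => snd (fst t)) E) as e3; pose proof (f_equal (fun t => snd t) E) as e4; simpl in e1, e2, e3, e4. repeat split; auto. }
    destruct (uniq1 Omega y1 x1 A1 B1 z0 HO HPC Hz0 Hy1 (proj1 CX1) (fun z Hz => proj1 (Eq z Hz))) as [c1 Hc1].
    destruct (uniq1 Omega y2 x2 A2 B2 z0 HO HPC Hz0 Hy2 (proj1 CX2) (fun z Hz => proj1 (proj2 (Eq z Hz)))) as [c2 Hc2].
    destruct (uniq1 Omega y3 x3 _ _ z0 HO HPC Hz0 Hy3 (proj1 CX3) (fun z Hz => proj1 (proj2 (proj2 (Eq z Hz))))) as [c3 Hc3].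
    destruct (uniq1 Omega y4 x4 _ _ z0 HO HPC Hz0 Hy4 (proj1 CX4) (fun z Hz => proj2 (proj2 (proj2 (Eq z Hz))))) as [c4 Hc4].
    exists c1, c2, c3, c4. intros z Hz. repeat split; auto. }
  split; [exact HXzzb|].
  split.
  { exists 0, 0. intros z Hz. unfold x3, x4. split; ring. }
  split.
  { intros z Hz. split; auto. rewrite HXz by auto. pose proof (Hm z Hz).
    unfold lor, Cminus, Cdiv, Gvec, WformulaXz, add4, scal4, Cmult, Cplus, Cminus, Copp, Cinv, Cdiv, Ci, RtoC.
    rewrite Cmod2, Hg_eq, !dz_eq. unfold Re, Im. simpl. pair_eq; field; auto. }
  split.
  { intros z Hz. pose proof (Hm z Hz) as Hmz.
    assert (HLam : Lambda x1 x2 x3 x4 z = RtoC (4 / Cmod (g z) ^ 2 * Cmod (Cminus (dz P z) (Cmult (Cabs2 (g z)) (dz Q z))) ^ 2)).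
    { unfold Lambda. rewrite HXz by auto. unfold WformulaXz, Cabs2. rewrite !Cmod2, !dz_eq, !Hg_eq.
      unfold lor, Cminus, Cdiv, conj4, Cconj, WformulaXz, add4, scal4, Cmult, Cplus, Cminus, Copp, Cinv, Cdiv, Ci, RtoC. simpl.
      pair_eq; field; auto. }
    split; [|exact HLam]. split; [|split].
    - rewrite HXz by auto. unfold lor, Cminus, Cdiv, WformulaXz, add4, scal4, Cmult, Cplus, Cminus, Copp, Cinv, Cdiv, Ci, RtoC.
      rewrite Hg_eq, !dz_eq. simpl. pair_eq; field; auto.
    - rewrite HLam. reflexivity.
    - rewrite HLam. simpl.
      assert (Hg0 : 0 < Cmod (g z)) by (apply Cmod_gt_0; apply Hgnz; auto).
      assert (Hw0 : 0 < Cmod (Cminus (dz P z) (Cmult (Cabs2 (g z)) (dz Q z)))) by (apply Cmod_gt_0; apply Hnd; auto).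
      apply Rmult_lt_0_compat. apply Rdiv_lt_0_compat. lra. nra. nra. }
  { intros z Hz. unfold meanH. rewrite lor_scal4, HXzzb, lor_scal4, HGG by auto.
    apply Cmult_0_aux. }
Qed.
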